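(* (a) Let $h\ge0$ and let $H=H(z)$, $z>0$, be a continuous function. Then there exists a one-parameter family of helicoidal surfaces with pitch $h$ in $\mathbb{S}^3$ with mean curvature $H(z)$, uniquely determined, up to translations along $c_0$, by the spherical angular momenta of their profile curves given by $$\mathcal K(z)=\pm\frac{\sqrt{h^2+(1-h^2)z^2}\,A(z)}{\sqrt{1+h^2A(z)^2}},\qquad\text{where } z^2A(z)=2\int zH(z)\,dz.$$ (b) Let $h\ge0$, $h\ne1$, and let $K_{\mathrm{ext}}=K_{\mathrm{ext}}(z)$, $z>0$, be a continuous function. Then there exists a one-parameter family of helicoidal surfaces with pitch $h$ in $\mathbb{S}^3$ with extrinsic curvature $K_{\mathrm{ext}}(z)$, uniquely determined, up to translations along $c_0$, by the spherical angular momenta of their profile curves given by $$\mathcal K(z)=\pm\sqrt{1+\frac{(1-h^2)z^2B(z)}{z^2+h^2B(z)}},\qquad\text{where } B(z)=2\int zK_{\mathrm{ext}}(z)\,dz.$$ (In both cases the parameter of the family is the integration constant of the indefinite integral.)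
   Context: Identify $\mathbb{S}^3$ with the unit sphere of $\mathbb{R}^4$ and let $c_0=\{(x_1,x_2,0,0)\in\mathbb{S}^3\}$. For $h\ge0$ and a regular arc-length parametrized curve $\xi(s)=(x(s),y(s),z(s))$ in $\{(x,y,z)\in\mathbb{S}^2:z>0\}$ with $z$ non-constant, the helicoidal surface with pitch $h$ and profile curve $\xi$ is $X^h(\xi)(s,t)=(x\cos ht-y\sin ht,\ x\sin ht+y\cos ht,\ z\cos t,\ z\sin t)$; translations along $c_0$ are the rotations of the $(x_1,x_2)$-plane. The spherical angular momentum of $\xi$ is $\mathcal K=\dot x\,y-x\,\dot y$, regarded as a function of $z$. The mean curvature and Gaussian curvature $K_G$ are functions of $z$ only, and the extrinsic curvature is $K_{\mathrm{ext}}=K_G-1$. The sign $\pm$ corresponds to the choice of orientation. *)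

(* Defs.v *)
From Stdlib Require Import Reals.
From Coquelicot Require Import Coquelicot.
Open Scope R_scope.

Record R4 := mkR4 { p1 : R; p2 : R; p3 : R; p4 : R }.

Definition dot4 (u v : R4) : R :=
  p1 u * p1 v + p2 u * p2 v + p3 u * p3 v + p4 u * p4 v.

Definition scal4 (c : R) (u : R4) : R4 :=
  mkR4 (c * p1 u) (c * p2 u) (c * p3 u) (c * p4 u).

Definition det3 (a1 a2 a3 b1 b2 b3 c1 c2 c3 : R) : R :=
  a1 * (b2 * c3 - b3 * c2) - a2 * (b1 * c3 - b3 * c1) + a3 * (b1 * c2 - b2 * c1).

(** Generalized cross product in R^4: [dot4 (cross4 u v w) x = det(u,v,w,x)];
    it is orthogonal to u, v, w. *)
Definition cross4 (u v w : R4) : R4 :=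
  mkR4
    (- det3 (p2 u) (p3 u) (p4 u) (p2 v) (p3 v) (p4 v) (p2 w) (p3 w) (p4 w))
    (  det3 (p1 u) (p3 u) (p4 u) (p1 v) (p3 v) (p4 v) (p1 w) (p3 w) (p4 w))
    (- det3 (p1 u) (p2 u) (p4 u) (p1 v) (p2 v) (p4 v) (p1 w) (p2 w) (p4 w))
    (  det3 (p1 u) (p2 u) (p3 u) (p1 v) (p2 v) (p3 v) (p1 w) (p2 w) (p3 w)).

Definition dS (X : R -> R -> R4) (s t : R) : R4 :=
  mkR4 (Derive (fun u => p1 (X u t)) s) (Derive (fun u => p2 (X u t)) s)
       (Derive (fun u => p3 (X u t)) s) (Derive (fun u => p4 (X u t)) s).

Definition dT (X : R -> R -> R4) (s t : R) : R4 :=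
  mkR4 (Derive (fun v => p1 (X s v)) t) (Derive (fun v => p2 (X s v)) t)
       (Derive (fun v => p3 (X s v)) t) (Derive (fun v => p4 (X s v)) t).

(** Unit normal of the surface X (lying in S^3) inside S^3: orthogonal to the
    position vector X and to the tangent vectors X_s, X_t.  (The opposite
    orientation is -N; the sign choice is handled explicitly below.) *)
Definition unit_normal (X : R -> R -> R4) (s t : R) : R4 :=
  let Nr := cross4 (X s t) (dS X s t) (dT X s t) in
  scal4 (/ sqrt (dot4 Nr Nr)) Nr.

Definition fE (X : R -> R -> R4) s t := dot4 (dS X s t) (dS X s t).
Definition fF (X : R -> R -> R4) s t := dot4 (dS X s t) (dT X s t).
Definition fG (X : R -> R -> R4) s t := dot4 (dT X s t) (dT X s t).

Definition sl (X : R -> R -> R4) s t := dot4 (dS (dS X) s t) (unit_normal X s t).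
Definition sm (X : R -> R -> R4) s t := dot4 (dT (dS X) s t) (unit_normal X s t).
Definition sn (X : R -> R -> R4) s t := dot4 (dT (dT X) s t) (unit_normal X s t).

Definition mean_curv (X : R -> R -> R4) (s t : R) : R :=
  (fE X s t * sn X s t - 2 * fF X s t * sm X s t + fG X s t * sl X s t)
  / (2 * (fE X s t * fG X s t - fF X s t ^ 2)).

Definition ext_curv (X : R -> R -> R4) (s t : R) : R :=
  (sl X s t * sn X s t - sm X s t ^ 2)
  / (fE X s t * fG X s t - fF X s t ^ 2).

Definition in_I (a b : Rbar) (s : R) : Prop := Rbar_lt a s /\ Rbar_lt s b.

(** xi = (x,y,z) : (a,b) -> S^2, C^2, arc-length parametrized, z > 0, and
    z is a (local) coordinate along the curve: z' <> 0. *)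
Definition admissible_profile (a b : Rbar) (x y z : R -> R) : Prop :=
  Rbar_lt a b /\
  forall s, in_I a b s ->
    x s ^ 2 + y s ^ 2 + z s ^ 2 = 1 /\ 0 < z s /\
    ex_derive x s /\ ex_derive y s /\ ex_derive z s /\
    ex_derive (Derive x) s /\ ex_derive (Derive y) s /\ ex_derive (Derive z) s /\
    continuous (Derive (Derive x)) s /\ continuous (Derive (Derive y)) s /\
    continuous (Derive (Derive z)) s /\
    Derive x s ^ 2 + Derive y s ^ 2 + Derive z s ^ 2 = 1 /\
    Derive z s <> 0.

Definition Xh (h : R) (x y z : R -> R) (s t : R) : R4 :=
  mkR4 (x s * cos (h * t) - y s * sin (h * t))
       (x s * sin (h * t) + y s * cos (h * t))
       (z s * cos t) (z s * sin t).

(** translation along c_0 = rotation of the (x1,x2)-plane *)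
Definition transl_c0 (alpha : R) (p : R4) : R4 :=
  mkR4 (p1 p * cos alpha - p2 p * sin alpha)
       (p1 p * sin alpha + p2 p * cos alpha) (p3 p) (p4 p).

Definition ang_mom (x y : R -> R) (s : R) : R := Derive x s * y s - x s * Derive y s.

(** The surface X^h(xi) has mean curvature H(z) (for one of its two orientations) *)
Definition has_mean_curvature (h : R) (a b : Rbar) (x y z : R -> R) (H : R -> R) : Prop :=
  exists eps : R, (eps = 1 \/ eps = -1) /\
    forall s t, in_I a b s -> eps * mean_curv (Xh h x y z) s t = H (z s).

Definition has_ext_curvature (h : R) (a b : Rbar) (x y z : R -> R) (Kext : R -> R) : Prop :=
  forall s t, in_I a b s -> ext_curv (Xh h x y z) s t = Kext (z s).

Definition antideriv (f P : R -> R) : Prop :=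
  forall z, 0 < z -> is_derive P z (f z).

(** formula (a): z^2 A(z) = Phi(z) *)
Definition fA (h : R) (Phi : R -> R) (z : R) : R :=
  let A := Phi z / z ^ 2 in
  sqrt (h ^ 2 + (1 - h ^ 2) * z ^ 2) * A / sqrt (1 + h ^ 2 * A ^ 2).

(** radicand of formula (b) *)
Definition RB (h : R) (B : R -> R) (z : R) : R :=
  1 + (1 - h ^ 2) * z ^ 2 * B z / (z ^ 2 + h ^ 2 * B z).

(** Uniqueness up to translations along c_0: two profile curves with the same
    spherical angular momentum as a function of z (F), passing through the same
    height z with z moving in the same direction, give helicoidal surfaces that
    differ by a translation along c_0 (after the shift of arc length). *)
Definition c0_uniqueness (h : R) : Prop :=
  forall (F : R -> R) (a1 b1 a2 b2 : Rbar) (x1 y1 z1 x2 y2 z2 : R -> R) (s1 s2 : R),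
    admissible_profile a1 b1 x1 y1 z1 ->
    admissible_profile a2 b2 x2 y2 z2 ->
    (forall s, in_I a1 b1 s -> ang_mom x1 y1 s = F (z1 s)) ->
    (forall s, in_I a2 b2 s -> ang_mom x2 y2 s = F (z2 s)) ->
    in_I a1 b1 s1 -> in_I a2 b2 s2 ->
    z1 s1 = z2 s2 ->
    0 < Derive z1 s1 * Derive z2 s2 ->
    exists alpha : R, forall u t,
      in_I a1 b1 (s1 + u) -> in_I a2 b2 (s2 + u) ->
      Xh h x2 y2 z2 (s2 + u) t = transl_c0 alpha (Xh h x1 y1 z1 (s1 + u) t).

(* Main.v *)
Require Import Defs.
From Stdlib Require Import Reals Lra ClassicalEpsilon Ranalysis5.
From Coquelicot Require Import Coquelicot.
Open Scope R_scope.

Ltac etaf := repeat match goal with |- context [Derive (fun t => ?f t) ?s] => change (Derive (fun t => f t) s) with (Derive f s) end.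
Ltac lc e := apply Rminus_diag_uniq; transitivity e; [ring | ].

Lemma in_I_loc a b s : in_I a b s -> locally s (in_I a b).
Proof.
  intros Hs. assert (Ho : open (fun u : R => Rbar_lt a u /\ Rbar_lt u b)).
  { apply open_and. apply open_Rbar_gt. apply open_Rbar_lt. }
  apply Ho. exact Hs.
Qed.

Definition rot4 (c1 s1 c2 s2 : R) (u : R4) : R4 :=
  mkR4 (p1 u * c1 - p2 u * s1) (p1 u * s1 + p2 u * c1) (p3 u * c2 - p4 u * s2) (p3 u * s2 + p4 u * c2).

Section G.
Variables (h : R) (a b : Rbar) (x y z : R -> R).
Hypothesis Ha : admissible_profile a b x y z.

Let X := Xh h x y z.

Lemma adm_dx s : in_I a b s -> ex_derive x s. Proof. intro Hs; apply (proj2 Ha s Hs). Qed.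
Lemma adm_dy s : in_I a b s -> ex_derive y s. Proof. intro Hs; apply (proj2 Ha s Hs). Qed.
Lemma adm_dz s : in_I a b s -> ex_derive z s. Proof. intro Hs; apply (proj2 Ha s Hs). Qed.
Lemma adm_ddx s : in_I a b s -> ex_derive (Derive x) s. Proof. intro Hs; apply (proj2 Ha s Hs). Qed.
Lemma adm_ddy s : in_I a b s -> ex_derive (Derive y) s. Proof. intro Hs; apply (proj2 Ha s Hs). Qed.
Lemma adm_ddz s : in_I a b s -> ex_derive (Derive z) s. Proof. intro Hs; apply (proj2 Ha s Hs). Qed.

Lemma dS_Xh s t : in_I a b s ->
  dS X s t = rot4 (cos (h*t)) (sin (h*t)) (cos t) (sin t) (mkR4 (Derive x s) (Derive y s) (Derive z s) 0).
Proof.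
  intros Hs. pose proof (adm_dx s Hs). pose proof (adm_dy s Hs). pose proof (adm_dz s Hs).
  unfold dS, rot4, X, Xh; simpl; f_equal; apply is_derive_unique; auto_derive; auto; etaf; ring.
Qed.

Lemma dT_Xh s t :
  dT X s t = rot4 (cos (h*t)) (sin (h*t)) (cos t) (sin t) (mkR4 (-(h * y s)) (h * x s) 0 (z s)).
Proof.
  unfold dT, rot4, X, Xh; simpl; f_equal; apply is_derive_unique; auto_derive; auto; ring.
Qed.

Lemma Xh_rot s t :
  X s t = rot4 (cos (h*t)) (sin (h*t)) (cos t) (sin t) (mkR4 (x s) (y s) (z s) 0).
Proof. unfold rot4, X, Xh; simpl; f_equal; ring. Qed.

Lemma dSdS_Xh s t : in_I a b s ->
  dS (dS X) s t = rot4 (cos (h*t)) (sin (h*t)) (cos t) (sin t)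
     (mkR4 (Derive (Derive x) s) (Derive (Derive y) s) (Derive (Derive z) s) 0).
Proof.
  intros Hs. pose proof (adm_ddx s Hs). pose proof (adm_ddy s Hs). pose proof (adm_ddz s Hs).
  assert (Hl := in_I_loc a b s Hs).
  unfold dS at 1. unfold rot4; simpl; f_equal.
  - rewrite (Derive_ext_loc _ (fun u => Derive x u * cos (h*t) - Derive y u * sin (h*t))).
    + apply is_derive_unique; auto_derive; auto; etaf; ring.
    + apply (filter_imp (in_I a b)); [intros u Hu; exact (f_equal p1 (dS_Xh u t Hu)) | exact Hl].
  - rewrite (Derive_ext_loc _ (fun u => Derive x u * sin (h*t) + Derive y u * cos (h*t))).
    + apply is_derive_unique; auto_derive; auto; etaf; ring.
    + apply (filter_imp (in_I a b)); [intros u Hu; exact (f_equal p2 (dS_Xh u t Hu)) | exact Hl].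
  - rewrite (Derive_ext_loc _ (fun u => Derive z u * cos t - 0 * sin t)).
    + apply is_derive_unique; auto_derive; auto; etaf; ring.
    + apply (filter_imp (in_I a b)); [intros u Hu; exact (f_equal p3 (dS_Xh u t Hu)) | exact Hl].
  - rewrite (Derive_ext_loc _ (fun u => Derive z u * sin t + 0 * cos t)).
    + apply is_derive_unique; auto_derive; auto; etaf; ring.
    + apply (filter_imp (in_I a b)); [intros u Hu; exact (f_equal p4 (dS_Xh u t Hu)) | exact Hl].
Qed.

Lemma dTdS_Xh s t : in_I a b s ->
  dT (dS X) s t = rot4 (cos (h*t)) (sin (h*t)) (cos t) (sin t)
     (mkR4 (-(h * Derive y s)) (h * Derive x s) 0 (Derive z s)).
Proof.
  intros Hs. unfold dT at 1.
  rewrite (Derive_ext (fun v => p1 (dS X s v)) (fun v => p1 (rot4 (cos (h*v)) (sin (h*v)) (cos v) (sin v) (mkR4 (Derive x s) (Derive y s) (Derive z s) 0)))) by (intro v; rewrite dS_Xh; auto).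
  rewrite (Derive_ext (fun v => p2 (dS X s v)) (fun v => p2 (rot4 (cos (h*v)) (sin (h*v)) (cos v) (sin v) (mkR4 (Derive x s) (Derive y s) (Derive z s) 0)))) by (intro v; rewrite dS_Xh; auto).
  rewrite (Derive_ext (fun v => p3 (dS X s v)) (fun v => p3 (rot4 (cos (h*v)) (sin (h*v)) (cos v) (sin v) (mkR4 (Derive x s) (Derive y s) (Derive z s) 0)))) by (intro v; rewrite dS_Xh; auto).
  rewrite (Derive_ext (fun v => p4 (dS X s v)) (fun v => p4 (rot4 (cos (h*v)) (sin (h*v)) (cos v) (sin v) (mkR4 (Derive x s) (Derive y s) (Derive z s) 0)))) by (intro v; rewrite dS_Xh; auto).
  unfold rot4; simpl; f_equal; apply is_derive_unique; auto_derive; auto; ring.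
Qed.

Lemma dTdT_Xh s t :
  dT (dT X) s t = rot4 (cos (h*t)) (sin (h*t)) (cos t) (sin t)
     (mkR4 (-(h^2 * x s)) (-(h^2 * y s)) (- z s) 0).
Proof.
  unfold dT at 1.
  rewrite (Derive_ext (fun v => p1 (dT X s v)) (fun v => p1 (rot4 (cos (h*v)) (sin (h*v)) (cos v) (sin v) (mkR4 (-(h * y s)) (h * x s) 0 (z s))))) by (intro v; rewrite dT_Xh; auto).
  rewrite (Derive_ext (fun v => p2 (dT X s v)) (fun v => p2 (rot4 (cos (h*v)) (sin (h*v)) (cos v) (sin v) (mkR4 (-(h * y s)) (h * x s) 0 (z s))))) by (intro v; rewrite dT_Xh; auto).
  rewrite (Derive_ext (fun v => p3 (dT X s v)) (fun v => p3 (rot4 (cos (h*v)) (sin (h*v)) (cos v) (sin v) (mkR4 (-(h * y s)) (h * x s) 0 (z s))))) by (intro v; rewrite dT_Xh; auto).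
  rewrite (Derive_ext (fun v => p4 (dT X s v)) (fun v => p4 (rot4 (cos (h*v)) (sin (h*v)) (cos v) (sin v) (mkR4 (-(h * y s)) (h * x s) 0 (z s))))) by (intro v; rewrite dT_Xh; auto).
  unfold rot4; simpl; f_equal; apply is_derive_unique; auto_derive; auto; ring.
Qed.
End G.

Definition MCf (P Ps Pt Pss Pst Ptt : R4) : R :=
  let Nr := cross4 P Ps Pt in let N := scal4 (/ sqrt (dot4 Nr Nr)) Nr in
  let E := dot4 Ps Ps in let F := dot4 Ps Pt in let G := dot4 Pt Pt in
  (E * dot4 Ptt N - 2 * F * dot4 Pst N + G * dot4 Pss N) / (2 * (E * G - F ^ 2)).

Definition ECf (P Ps Pt Pss Pst Ptt : R4) : R :=
  let Nr := cross4 P Ps Pt in let N := scal4 (/ sqrt (dot4 Nr Nr)) Nr in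
  let E := dot4 Ps Ps in let F := dot4 Ps Pt in let G := dot4 Pt Pt in
  (dot4 Pss N * dot4 Ptt N - dot4 Pst N ^ 2) / (E * G - F ^ 2).

Lemma mean_curv_MCf X s t : mean_curv X s t =
  MCf (X s t) (dS X s t) (dT X s t) (dS (dS X) s t) (dT (dS X) s t) (dT (dT X) s t).
Proof. reflexivity. Qed.
Lemma ext_curv_ECf X s t : ext_curv X s t =
  ECf (X s t) (dS X s t) (dT X s t) (dS (dS X) s t) (dT (dS X) s t) (dT (dT X) s t).
Proof. reflexivity. Qed.

Lemma dot_scal u k v : dot4 u (scal4 k v) = k * dot4 v u.
Proof. destruct u, v; unfold dot4, scal4; simpl; ring. Qed.

Lemma dot_rot c1 s1 c2 s2 u v : c1^2 + s1^2 = 1 -> c2^2 + s2^2 = 1 ->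
  dot4 (rot4 c1 s1 c2 s2 u) (rot4 c1 s1 c2 s2 v) = dot4 u v.
Proof.
  intros H1 H2. destruct u as [u1 u2 u3 u4], v as [v1 v2 v3 v4]; unfold dot4, rot4; simpl.
  lc ((u1*v1+u2*v2)*(c1^2+s1^2-1) + (u3*v3+u4*v4)*(c2^2+s2^2-1)).
  rewrite (Rminus_diag_eq _ _ H1), (Rminus_diag_eq _ _ H2). ring.
Qed.

Lemma det_rot c1 s1 c2 s2 u v w q : c1^2 + s1^2 = 1 -> c2^2 + s2^2 = 1 ->
  dot4 (cross4 (rot4 c1 s1 c2 s2 u) (rot4 c1 s1 c2 s2 v) (rot4 c1 s1 c2 s2 w)) (rot4 c1 s1 c2 s2 q)
  = dot4 (cross4 u v w) q.
Proof.
  intros H1 H2.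
  transitivity ((c1^2+s1^2)*(c2^2+s2^2) * dot4 (cross4 u v w) q).
  - destruct u, v, w, q; unfold dot4, cross4, det3, rot4; simpl; ring.
  - rewrite H1, H2; ring.
Qed.

Lemma gram4 u v w : dot4 (cross4 u v w) (cross4 u v w) =
  let a := dot4 u u in let b := dot4 u v in let c := dot4 u w in
  let d := dot4 v v in let e := dot4 v w in let f := dot4 w w in
  a*(d*f - e*e) - b*(b*f - e*c) + c*(b*e - d*c).
Proof. destruct u, v, w; unfold dot4, cross4, det3; simpl; ring. Qed.

Lemma MCf_rot c1 s1 c2 s2 P Ps Pt Pss Pst Ptt : c1^2 + s1^2 = 1 -> c2^2 + s2^2 = 1 ->
  MCf (rot4 c1 s1 c2 s2 P) (rot4 c1 s1 c2 s2 Ps) (rot4 c1 s1 c2 s2 Pt) (rot4 c1 s1 c2 s2 Pss) (rot4 c1 s1 c2 s2 Pst) (rot4 c1 s1 c2 s2 Ptt) = MCf P Ps Pt Pss Pst Ptt.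
Proof.
  intros H1 H2. set (r := rot4 c1 s1 c2 s2). unfold MCf. cbv zeta. rewrite !dot_scal, !gram4. unfold r.
  rewrite !dot_rot, !det_rot by auto. reflexivity.
Qed.

Lemma ECf_rot c1 s1 c2 s2 P Ps Pt Pss Pst Ptt : c1^2 + s1^2 = 1 -> c2^2 + s2^2 = 1 ->
  ECf (rot4 c1 s1 c2 s2 P) (rot4 c1 s1 c2 s2 Ps) (rot4 c1 s1 c2 s2 Pt) (rot4 c1 s1 c2 s2 Pss) (rot4 c1 s1 c2 s2 Pst) (rot4 c1 s1 c2 s2 Ptt) = ECf P Ps Pt Pss Pst Ptt.
Proof.
  intros H1 H2. set (r := rot4 c1 s1 c2 s2). unfold ECf. cbv zeta. rewrite !dot_scal, !gram4. unfold r.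
  rewrite !dot_rot, !det_rot by auto. reflexivity.
Qed.

Lemma MC_alg (x y z x1 y1 z1 x2 y2 z2 h : R) : 0 < z ->
  x^2+y^2+z^2 = 1 -> x1^2+y1^2+z1^2 = 1 -> x*x1+y*y1+z*z1 = 0 -> x1*x2+y1*y2+z1*z2 = 0 ->
  let P := mkR4 x y z 0 in let Ps := mkR4 x1 y1 z1 0 in
  let Pt := mkR4 (-(h*y)) (h*x) 0 z in let Pss := mkR4 x2 y2 z2 0 in
  let Pst := mkR4 (-(h*y1)) (h*x1) 0 z1 in let Ptt := mkR4 (-(h^2*x)) (-(h^2*y)) (-z) 0 in
  let K := x1*y - x*y1 in let K1 := x2*y - x*y2 in
  let W := h^2*(1-z^2)+z^2-h^2*K^2 in
  0 < W /\
  2*z*z1*MCf P Ps Pt Pss Pst Ptt * (W*sqrt W) =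
     -((2*z*z1*K + z^2*K1)*W - z^2*K*((1-h^2)*z*z1 - h^2*K*K1)) /\
  2*z*z1*ECf P Ps Pt Pss Pst Ptt * W^2 =
     (2*K*K1*z^2 + (K^2-1)*2*z*z1)*W - (K^2-1)*z^2*2*((1-h^2)*z*z1 - h^2*K*K1).
Proof.
  intros Hz r0 r1 d0 d1 P Ps Pt Pss Pst Ptt K K1 W.
  apply Rminus_diag_eq in r0. apply Rminus_diag_eq in r1.
  apply Rminus_diag_eq in d0. apply Rminus_diag_eq in d1.
  assert (HK : K^2 = 1 - z^2 - z1^2).
  { unfold K. lc ((x^2+y^2+z^2-1)*(1 - z1^2 + (x1^2+y1^2+z1^2-1)) + (1-z^2)*(x1^2+y1^2+z1^2-1)
        + 2*(x*x1+y*y1+z*z1-0)*z*z1 - (x*x1+y*y1+z*z1-0)*(x*x1+y*y1+z*z1-0)).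
    rewrite r0, r1, d0. ring. }
  assert (HW : W = z^2 + h^2*z1^2). { unfold W. rewrite HK. ring. }
  assert (Wpos : 0 < W). { rewrite HW. nra. }
  set (tau := x2*(y*z1 - z*y1) + y2*(z*x1 - x*z1) + z2*(x*y1 - y*x1)).
  assert (Htau : z1 * tau = K1).
  { unfold tau, K1. lc ((x*x1+y*y1+z*z1-0)*(x1*y2-y1*x2) + (x1^2+y1^2+z1^2-1)*(x2*y-y2*x)
                        + (x1*x2+y1*y2+z1*z2-0)*(x*y1-y*x1)).
    rewrite r1, d0, d1. ring. }
  set (Nv := cross4 P Ps Pt).
  assert (HN : Nv = mkR4 (-(z*(y*z1 - z*y1))) (-(z*(z*x1 - x*z1))) (-(z*(x*y1-y*x1))) (-(h*z1))).
  { unfold Nv, P, Ps, Pt, cross4, det3; simpl. f_equal; try ring.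
    lc (h*z*(x*x1+y*y1+z*z1-0) - h*z1*(x^2+y^2+z^2-1)). rewrite r0, d0. ring. }
  assert (hE : dot4 Ps Ps = 1).
  { unfold Ps, dot4; simpl. lc (x1^2+y1^2+z1^2-1). rewrite r1. ring. }
  assert (hF : dot4 Ps Pt = -(h*K)). { unfold Ps, Pt, dot4, K; simpl. ring. }
  assert (hG : dot4 Pt Pt = h^2*(1-z^2)+z^2).
  { unfold Pt, dot4; simpl. lc (h^2*(x^2+y^2+z^2-1)). rewrite r0. ring. }
  assert (hNN : dot4 Nv Nv = W).
  { rewrite HN, HW. unfold dot4; simpl.
    lc (z^2*((x^2+y^2+z^2-1)*(x1^2+y1^2+z1^2-1) + (x^2+y^2+z^2-1) + (x1^2+y1^2+z1^2-1)
          - (x*x1+y*y1+z*z1-0)*(x*x1+y*y1+z*z1-0))).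
    rewrite r0, r1, d0. ring. }
  assert (hl : dot4 Nv Pss = -(z*tau)). { rewrite HN. unfold Pss, tau, dot4; simpl. ring. }
  assert (hm : dot4 Nv Pst = -(h*(z^2+z1^2))).
  { rewrite HN. unfold Pst, dot4; simpl.
    lc (-(z*h*(z*(x1^2+y1^2+z1^2-1) - z1*(x*x1+y*y1+z*z1-0)))). rewrite r1, d0. ring. }
  assert (hn : dot4 Nv Ptt = -((1-h^2)*z^2*K)). { rewrite HN. unfold Ptt, K, dot4; simpl. ring. }
  assert (sqW : sqrt W * sqrt W = W) by (apply sqrt_sqrt; lra).
  assert (sqp : 0 < sqrt W) by (apply sqrt_lt_R0; lra).
  assert (hEG : 1 * (h ^ 2 * (1 - z ^ 2) + z ^ 2) - (- (h * K)) ^ 2 = W) by (unfold W; ring).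
  split; [exact Wpos|split].
  - unfold MCf. cbv zeta. fold Nv. rewrite !dot_scal, hE, hF, hG, hNN, hl, hm, hn, hEG.
    transitivity (z*z1*(-((1-h^2)*z^2*K) + 2*h*K*(-(h*(z^2+z1^2))) + (h^2*(1-z^2)+z^2)*(-(z*tau)))).
    + field; lra.
    + unfold W. lc (-(2*z*z1*K*h^2)*(K^2 - (1-z^2-z1^2)) - (h^2*(1-z^2)+z^2)*z^2*(z1*tau - K1)).
      rewrite HK, Htau. ring.
  - unfold ECf. cbv zeta. fold Nv. rewrite !dot_scal, hE, hF, hG, hNN, hl, hm, hn, hEG.
    transitivity (2*z*z1*((-(z*tau))*(-((1-h^2)*z^2*K)) - (h*(z^2+z1^2))^2)).
    + assert (Hinv : / sqrt W * / sqrt W = / W).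
      { rewrite <- Rinv_mult, sqW. reflexivity. }
      transitivity (2*z*z1*((/ sqrt W * / sqrt W) * ((-(z*tau))*(-((1-h^2)*z^2*K)) - (h*(z^2+z1^2))^2)) / W * W^2).
      * unfold Rdiv. ring.
      * rewrite Hinv. field. lra.
    + unfold W. lc (2*(1-h^2)*z^4*K*(z1*tau - K1) - 2*h^2*z*z1*(1-K^2+z^2+z1^2)*(K^2 - (1-z^2-z1^2))).
      rewrite HK, Htau. ring.
Qed.

Lemma loc_const_deriv (f : R -> R) s c l :
  locally s (fun u => f u = c) -> is_derive f s l -> l = 0.
Proof.
  intros Hl Hd.
  assert (Hd' : is_derive (fun _ => c) s l).
  { apply (is_derive_ext_loc f); auto. }
  assert (Hc : is_derive (fun _ : R => c) s 0) by (auto_derive; auto; ring).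
  rewrite <- (is_derive_unique _ _ _ Hd'). apply is_derive_unique; auto.
Qed.

Definition Kf (x y : R -> R) s := ang_mom x y s.
Definition K1f (x y : R -> R) s := Derive (Derive x) s * y s - x s * Derive (Derive y) s.
Definition Wf (h : R) (x y z : R -> R) s :=
  h^2*(1 - z s^2) + z s^2 - h^2 * ang_mom x y s ^ 2.

Section G2.
Variables (h : R) (a b : Rbar) (x y z : R -> R).
Hypothesis Ha : admissible_profile a b x y z.

Lemma adm_rel s : in_I a b s ->
  x s * Derive x s + y s * Derive y s + z s * Derive z s = 0 /\
  Derive x s * Derive (Derive x) s + Derive y s * Derive (Derive y) s + Derive z s * Derive (Derive z) s = 0.
Proof.
  intros Hs. assert (Hl := in_I_loc a b s Hs).
  pose proof (adm_dx a b x y z Ha s Hs). pose proof (adm_dy a b x y z Ha s Hs). pose proof (adm_dz a b x y z Ha s Hs).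
  pose proof (adm_ddx a b x y z Ha s Hs). pose proof (adm_ddy a b x y z Ha s Hs). pose proof (adm_ddz a b x y z Ha s Hs).
  split.
  - assert (E : 2 * (x s * Derive x s + y s * Derive y s + z s * Derive z s) = 0).
    { apply (loc_const_deriv (fun u => x u ^ 2 + y u ^ 2 + z u ^ 2) s 1).
      - apply (filter_imp (in_I a b)); [intros u Hu; apply (proj2 Ha u Hu) | exact Hl].
      - auto_derive; auto. etaf; ring. }
    lra.
  - assert (E : 2 * (Derive x s * Derive (Derive x) s + Derive y s * Derive (Derive y) s + Derive z s * Derive (Derive z) s) = 0).
    { apply (loc_const_deriv (fun u => Derive x u ^ 2 + Derive y u ^ 2 + Derive z u ^ 2) s 1).
      - apply (filter_imp (in_I a b)); [intros u Hu; apply (proj2 Ha u Hu) | exact Hl].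
      - auto_derive; auto. etaf; ring. }
    lra.
Qed.

Theorem geo_formula s t : in_I a b s ->
  let K := Kf x y s in let K1 := K1f x y s in let z1 := Derive z s in
  let W := Wf h x y z s in
  0 < W /\
  2 * z s * z1 * mean_curv (Xh h x y z) s t * (W * sqrt W) =
     -((2*z s*z1*K + z s^2*K1)*W - z s^2*K*((1-h^2)*z s*z1 - h^2*K*K1)) /\
  2 * z s * z1 * ext_curv (Xh h x y z) s t * W^2 =
     (2*K*K1*z s^2 + (K^2-1)*2*z s*z1)*W - (K^2-1)*z s^2*2*((1-h^2)*z s*z1 - h^2*K*K1).
Proof.
  intros Hs K K1 z1 W.
  destruct (proj2 Ha s Hs) as (r0 & zp & _ & _ & _ & _ & _ & _ & _ & _ & _ & r1 & _).
  destruct (adm_rel s Hs) as [d0 d1].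
  assert (c1 : cos (h*t) ^ 2 + sin (h*t) ^2 = 1) by (rewrite Rplus_comm, <- !Rsqr_pow2; apply sin2_cos2).
  assert (c2 : cos t ^ 2 + sin t ^2 = 1) by (rewrite Rplus_comm, <- !Rsqr_pow2; apply sin2_cos2).
  rewrite mean_curv_MCf, ext_curv_ECf, Xh_rot, (dS_Xh h a b x y z Ha s t Hs), dT_Xh,
    (dSdS_Xh h a b x y z Ha s t Hs), (dTdS_Xh h a b x y z Ha s t Hs), dTdT_Xh.
  rewrite MCf_rot, ECf_rot by auto.
  exact (MC_alg (x s) (y s) (z s) (Derive x s) (Derive y s) (Derive z s)
     (Derive (Derive x) s) (Derive (Derive y) s) (Derive (Derive z) s) h zp r0 r1 d0 d1).
Qed.
End G2.

Lemma is_derive_div_sqrt (N W : R -> R) s n' w' :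
  is_derive N s n' -> is_derive W s w' -> 0 < W s ->
  is_derive (fun u => N u / sqrt (W u)) s ((n' * W s - N s * (w'/2)) / (W s * sqrt (W s))).
Proof.
  intros HN HW Wp.
  assert (eN : ex_derive N s) by (eexists; eauto).
  assert (eW : ex_derive W s) by (eexists; eauto).
  assert (qp : 0 < sqrt (W s)) by (apply sqrt_lt_R0; auto).
  assert (qq : sqrt (W s) * sqrt (W s) = W s) by (apply sqrt_sqrt; lra).
  auto_derive.
  - repeat split; auto. lra.
  - etaf. rewrite (is_derive_unique _ _ _ HN), (is_derive_unique _ _ _ HW).
    set (q := sqrt (W s)) in *. rewrite <- qq. field. lra.
Qed.

Lemma is_derive_div' (N W : R -> R) s n' w' :
  is_derive N s n' -> is_derive W s w' -> W s <> 0 ->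
  is_derive (fun u => N u / W u) s ((n' * W s - N s * w') / (W s ^ 2)).
Proof.
  intros HN HW Wp.
  assert (eN : ex_derive N s) by (eexists; eauto).
  assert (eW : ex_derive W s) by (eexists; eauto).
  auto_derive.
  - repeat split; auto.
  - etaf. rewrite (is_derive_unique _ _ _ HN), (is_derive_unique _ _ _ HW). field. auto.
Qed.

Section D.
Variables (h : R) (a b : Rbar) (x y z : R -> R).
Hypothesis Ha : admissible_profile a b x y z.

Lemma deriv_K s : in_I a b s -> is_derive (ang_mom x y) s (K1f x y s).
Proof.
  intros Hs.
  pose proof (adm_dx a b x y z Ha s Hs). pose proof (adm_dy a b x y z Ha s Hs).
  pose proof (adm_ddx a b x y z Ha s Hs). pose proof (adm_ddy a b x y z Ha s Hs).
  unfold ang_mom, K1f. auto_derive; auto. etaf. ring.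
Qed.

Lemma deriv_W s : in_I a b s -> is_derive (Wf h x y z) s
   (2*((1-h^2)*z s*Derive z s - h^2*Kf x y s*K1f x y s)).
Proof.
  intros Hs. pose proof (adm_dz a b x y z Ha s Hs). pose proof (deriv_K s Hs).
  assert (eK : ex_derive (ang_mom x y) s) by (eexists; eauto).
  unfold Wf, Kf. auto_derive; auto. etaf. rewrite (is_derive_unique _ _ _ H0). ring.
Qed.

Lemma deriv_fa s t : in_I a b s ->
  is_derive (fun u => z u ^ 2 * ang_mom x y u / sqrt (Wf h x y z u)) s
    (-(2 * z s * Derive z s * mean_curv (Xh h x y z) s t)).
Proof.
  intros Hs.
  destruct (geo_formula h a b x y z Ha s t Hs) as (Wp & HM & _).
  pose proof (adm_dz a b x y z Ha s Hs). pose proof (deriv_K s Hs).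
  assert (eK : ex_derive (ang_mom x y) s) by (eexists; eauto).
  assert (HN : is_derive (fun u => z u ^ 2 * ang_mom x y u) s
                 (2 * z s * Derive z s * Kf x y s + z s ^ 2 * K1f x y s)).
  { auto_derive; auto. etaf. rewrite (is_derive_unique _ _ _ H0). unfold Kf. ring. }
  pose proof (is_derive_div_sqrt _ _ s _ _ HN (deriv_W s Hs) Wp) as HD.
  match type of HD with is_derive _ _ ?v => match goal with |- is_derive _ _ ?w =>
    replace w with v; [exact HD|] end end. cbv beta.
  set (W := Wf h x y z s) in *. set (M := mean_curv (Xh h x y z) s t) in *.
  assert (qp : 0 < sqrt W) by (apply sqrt_lt_R0; auto).
  unfold Kf in *.
  assert (E : (2 * z s * Derive z s * ang_mom x y s + z s ^ 2 * K1f x y s) * W -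
      z s ^ 2 * ang_mom x y s * (2 * ((1 - h ^ 2) * z s * Derive z s - h ^ 2 * ang_mom x y s * K1f x y s) / 2)
      = - (2 * z s * Derive z s * M * (W * sqrt W))).
  { rewrite HM. field. }
  unfold Rdiv at 1. rewrite E. field. lra.
Qed.

Lemma deriv_fb s t : in_I a b s ->
  is_derive (fun u => (ang_mom x y u ^ 2 - 1) * z u ^ 2 / Wf h x y z u) s
    (2 * z s * Derive z s * ext_curv (Xh h x y z) s t).
Proof.
  intros Hs.
  destruct (geo_formula h a b x y z Ha s t Hs) as (Wp & _ & HE).
  pose proof (adm_dz a b x y z Ha s Hs). pose proof (deriv_K s Hs).
  assert (eK : ex_derive (ang_mom x y) s) by (eexists; eauto).
  assert (HN : is_derive (fun u => (ang_mom x y u ^ 2 - 1) * z u ^ 2) s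
                 (2 * Kf x y s * K1f x y s * z s ^ 2 + (Kf x y s ^ 2 - 1) * 2 * z s * Derive z s)).
  { auto_derive; auto. etaf. rewrite (is_derive_unique _ _ _ H0). unfold Kf. ring. }
  pose proof (is_derive_div' _ _ s _ _ HN (deriv_W s Hs) (Rgt_not_eq _ _ Wp)) as HD.
  match type of HD with is_derive _ _ ?v => match goal with |- is_derive _ _ ?w =>
    replace w with v; [exact HD|] end end. cbv beta.
  set (W := Wf h x y z s) in *. set (M := ext_curv (Xh h x y z) s t) in *.
  unfold Kf in *.
  assert (E : (2 * ang_mom x y s * K1f x y s * z s ^ 2 + (ang_mom x y s ^ 2 - 1) * 2 * z s * Derive z s) * W -
     (ang_mom x y s ^ 2 - 1) * z s ^ 2 * (2 * ((1 - h ^ 2) * z s * Derive z s - h ^ 2 * ang_mom x y s * K1f x y s))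
      = 2 * z s * Derive z s * M * W ^ 2).
  { rewrite HE. ring. }
  unfold Rdiv at 1. rewrite E. field. lra.
Qed.
End D.

Lemma in_I_between a b u v w : in_I a b u -> in_I a b v -> u <= w <= v -> in_I a b w.
Proof. unfold in_I; destruct a, b; simpl; intros; lra. Qed.

Lemma in_I_ex a b : Rbar_lt a b -> exists s, in_I a b s.
Proof.
  unfold in_I; destruct a as [a| |], b as [b| |]; simpl; intros H; try tauto.
  - exists ((a+b)/2); lra.
  - exists (a+1); lra.
  - exists (b-1); lra.
  - exists 0; auto.
Qed.

Lemma const_on_I a b (f : R -> R) :
  (forall u, in_I a b u -> is_derive f u 0) ->
  forall u v, in_I a b u -> in_I a b v -> f u = f v.
Proof.
  intros Hd.
  assert (K : forall u v, in_I a b u -> in_I a b v -> u < v -> f u = f v).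
  { intros u v Hu Hv Huv.
    destruct (MVT_cor2 f (fun _ => 0) u v Huv) as (c & Hc & _).
    - intros c Hc. apply is_derive_Reals. apply Hd. apply (in_I_between a b u v); auto.
    - lra. }
  intros u v Hu Hv. destruct (Rtotal_order u v) as [H|[H|H]].
  - auto.
  - subst; auto.
  - symmetry; auto.
Qed.

Lemma antideriv_exists (f : R -> R) :
  (forall w, 0 < w -> continuous f w) -> exists P, antideriv f P.
Proof.
  intros Hc. exists (fun w => RInt f 1 w). intros w Hw.
  apply (is_derive_RInt f (fun w => RInt f 1 w) 1 w); [|auto].
  assert (Hp : 0 < w/2) by lra.
  exists (mkposreal _ Hp). intros b Hb.
  change (Rabs (b - w) < w/2) in Hb.
  refine (RInt_correct f 1 b (ex_RInt_continuous f 1 b _)).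
  intros u Hu. apply Hc. apply Rabs_def2 in Hb.
  assert (0 < Rmin 1 b) by (apply Rmin_glb_lt; lra). lra.
Qed.

Lemma sqrt_sq_pos u : 0 <= u -> sqrt u * sqrt u = u.
Proof. apply sqrt_sqrt. Qed.

Lemma fA_of (h z K e W : R) (Phi : R -> R) : 0 < z -> 0 < W ->
  W = h^2*(1-z^2)+z^2 - h^2*K^2 -> (e = 1 \/ e = -1) ->
  Phi z = e * (z^2 * K / sqrt W) -> fA h Phi z = e * K.
Proof.
  intros zp Wp HW He HP. unfold fA. cbv zeta.
  set (A := Phi z / z^2) in *.
  set (w := sqrt W) in *. assert (wp : 0 < w) by (apply sqrt_lt_R0; auto).
  assert (ww : w * w = W) by (apply sqrt_sqrt; lra).
  assert (HA : A = e * K / w) by (unfold A; rewrite HP; field; lra).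
  set (G := h ^ 2 + (1 - h ^ 2) * z ^ 2) in *.
  assert (HG : G = W + h^2*K^2) by (unfold G; rewrite HW; ring).
  assert (Gp : 0 < G) by (rewrite HG; nra).
  set (g := sqrt G) in *. assert (gp : 0 < g) by (apply sqrt_lt_R0; auto).
  assert (gg : g * g = G) by (apply sqrt_sqrt; lra).
  assert (e2 : e * e = 1) by (destruct He; subst; ring).
  assert (Hq : 1 + h^2 * A^2 = (g/w)^2).
  { rewrite HA. replace ((g/w)^2) with ((g*g)/(w*w)) by (field; lra). rewrite gg, ww, HG.
    replace ((e*K/w)^2) with ((e*e)*K^2/(w*w)) by (field; lra). rewrite e2, ww. field. lra. }
  rewrite Hq, sqrt_pow2 by (apply Rlt_le, Rdiv_lt_0_compat; auto).
  fold g. rewrite HA. field. lra.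
Qed.

Lemma Phi_of (h z K e W : R) (Phi : R -> R) : 0 < z -> 0 < W ->
  W = h^2*(1-z^2)+z^2 - h^2*K^2 -> (e = 1 \/ e = -1) ->
  K = e * fA h Phi z -> Phi z = e * (z^2 * K / sqrt W).
Proof.
  intros zp Wp HW He HK. unfold fA in HK. cbv zeta in HK.
  set (A := Phi z / z^2) in *.
  set (G := h ^ 2 + (1 - h ^ 2) * z ^ 2) in *.
  assert (HG : G = W + h^2*K^2) by (unfold G; rewrite HW; ring).
  assert (Gp : 0 < G) by (rewrite HG; nra).
  set (g := sqrt G) in *. assert (gp : 0 < g) by (apply sqrt_lt_R0; auto).
  assert (gg : g * g = G) by (apply sqrt_sqrt; lra).
  set (q := sqrt (1 + h^2*A^2)) in *.
  assert (qp : 0 < q) by (apply sqrt_lt_R0; nra).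
  assert (qq : q * q = 1 + h^2*A^2) by (apply sqrt_sqrt; nra).
  assert (e2 : e * e = 1) by (destruct He; subst; ring).
  assert (HW2 : W = (g/q)^2).
  { replace W with (G - h^2*K^2) by lra. rewrite HK. rewrite <- gg.
    replace ((e * (g * A / q))^2) with ((e*e) * (g*g) * A^2 / (q*q)) by (field; lra).
    replace ((g/q)^2) with ((g*g)/(q*q)) by (field; lra).
    rewrite e2, qq. field. nra. }
  rewrite HW2, sqrt_pow2 by (apply Rlt_le, Rdiv_lt_0_compat; auto).
  replace (Phi z) with (z^2 * A) by (unfold A; field; lra).
  rewrite HK. transitivity ((e*e) * (z^2*A)); [rewrite e2; ring| field; lra].
Qed.

Lemma B_of1 (h z K W : R) (B : R -> R) : 0 < z -> 0 < W ->
  W = h^2*(1-z^2)+z^2 - h^2*K^2 -> h^2 <> 1 ->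
  B z = (K^2-1)*z^2/W -> z^2 + h^2 * B z <> 0 /\ RB h B z = K^2.
Proof.
  intros zp Wp HW Hh HB.
  assert (E0 : W + h^2*(K^2-1) = (1-h^2)*z^2) by (rewrite HW; ring).
  assert (E : z^2 + h^2 * B z = z^2*z^2*(1-h^2)/W).
  { rewrite HB. transitivity (z^2*(W + h^2*(K^2-1))/W); [field; lra | rewrite E0; field; lra]. }
  assert (N : z^2*z^2*(1-h^2)/W <> 0).
  { unfold Rdiv. repeat apply Rmult_integral_contrapositive_currified; try nra.
    apply Rinv_neq_0_compat; lra. }
  split. { rewrite E; auto. }
  unfold RB. rewrite E, HB. field. split; [lra|split; [intro C; apply Hh; lra|lra]].
Qed.

Lemma B_of2 (h z K W : R) (B : R -> R) : 0 < z -> 0 < W ->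
  W = h^2*(1-z^2)+z^2 - h^2*K^2 -> z^2 + h^2 * B z <> 0 ->
  RB h B z = K^2 -> B z = (K^2-1)*z^2/W.
Proof.
  intros zp Wp HW Hn HR. unfold RB in HR.
  assert (E : (K^2-1)*(z^2+h^2*B z) = (1-h^2)*z^2*B z).
  { rewrite <- HR. field. auto. }
  apply (Rmult_eq_reg_r W); [|lra]. unfold Rdiv. rewrite Rmult_assoc, Rinv_l by lra.
  rewrite HW. lra.
Qed.

Lemma cont_2z (H : R -> R) : (forall z, 0 < z -> continuous H z) ->
  forall z, 0 < z -> continuous (fun z => 2 * z * H z) z.
Proof.
  intros Hc w Hw. apply (continuous_mult (fun z => 2 * z) H); [|auto].
  apply (continuous_mult (fun _ => 2) (fun z => z)); [apply continuous_const | apply continuous_id].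
Qed.

Lemma adm_z1 a b x y z s : admissible_profile a b x y z -> in_I a b s -> 0 < z s /\ Derive z s <> 0.
Proof. intros Ha Hs. destruct (proj2 Ha s Hs) as (_ & zp & _ & _ & _ & _ & _ & _ & _ & _ & _ & _ & nz). auto. Qed.

Lemma deriv_comp_z (P f : R -> R) (z : R -> R) s : 0 < z s -> ex_derive z s ->
  antideriv f P -> is_derive (fun u => P (z u)) s (f (z s) * Derive z s).
Proof.
  intros zp dz HP. pose proof (HP (z s) zp) as HPs.
  replace (f (z s) * Derive z s) with (scal (Derive z s) (f (z s))) by (unfold scal; simpl; unfold mult; simpl; ring).
  apply (is_derive_comp P z s (f (z s)) (Derive z s)); auto.
  apply Derive_correct; auto.
Qed.

Section IA.
Variables (h : R) (H : R -> R).
Hypothesis Hc : forall z, 0 < z -> continuous H z.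

Theorem iff_a a b x y z : admissible_profile a b x y z ->
  (has_mean_curvature h a b x y z H <->
   exists (Phi : R -> R) (eps : R),
     antideriv (fun z => 2 * z * H z) Phi /\ (eps = 1 \/ eps = -1) /\
     forall s, in_I a b s -> ang_mom x y s = eps * fA h Phi (z s)).
Proof.
  intros Ha. split.
  - intros (eps0 & He & Hm).
    destruct (antideriv_exists _ (cont_2z H Hc)) as [Psi HPsi].
    set (g := fun u => z u ^ 2 * ang_mom x y u / sqrt (Wf h x y z u) + eps0 * Psi (z u)).
    assert (Hg : forall u, in_I a b u -> is_derive g u 0).
    { intros u Hu. destruct (adm_z1 _ _ _ _ _ _ Ha Hu) as [zp _].
      pose proof (deriv_fa h a b x y z Ha u 0 Hu) as D1.
      pose proof (deriv_comp_z Psi _ z u zp (adm_dz a b x y z Ha u Hu) HPsi) as D2.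
      pose proof (Hm u 0 Hu) as Hmu.
      assert (e2 : eps0 * eps0 = 1) by (destruct He; subst; ring).
      unfold g. replace 0 with (-(2 * z u * Derive z u * mean_curv (Xh h x y z) u 0)
                               + eps0 * (2 * z u * H (z u) * Derive z u)).
      + apply (is_derive_plus (fun u => z u ^ 2 * ang_mom x y u / sqrt (Wf h x y z u))
                 (fun u => eps0 * Psi (z u))); auto.
        apply (is_derive_scal (fun u => Psi (z u))); auto.
      + rewrite <- Hmu. transitivity (2 * z u * Derive z u * mean_curv (Xh h x y z) u 0 * (eps0*eps0 - 1)); [ring|].
        rewrite e2; ring. }
    destruct (in_I_ex a b (proj1 Ha)) as [s0 Hs0].
    set (c := g s0).
    exists (fun w => Psi w - eps0 * c), (-eps0). split; [|split].
    + intros w Hw. pose proof (HPsi w Hw) as D.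
      assert (eD : ex_derive Psi w) by (eexists; eauto).
      auto_derive; auto. etaf. rewrite (is_derive_unique _ _ _ D). ring.
    + destruct He; [right|left]; lra.
    + intros s Hs. destruct (adm_z1 _ _ _ _ _ _ Ha Hs) as [zp _].
      destruct (geo_formula h a b x y z Ha s 0 Hs) as (Wp & _ & _).
      assert (Hgs : g s = c) by (apply (const_on_I a b g Hg); auto).
      assert (e2 : eps0 * eps0 = 1) by (destruct He; subst; ring).
      rewrite (fA_of h (z s) (ang_mom x y s) (-eps0) (Wf h x y z s)); auto.
      * transitivity ((eps0*eps0) * ang_mom x y s); [rewrite e2; ring | ring].
      * destruct He; [right|left]; lra.
      * unfold g in Hgs. rewrite <- Hgs.
        transitivity ((- (eps0*eps0)) * Psi (z s) - eps0 * (z s ^ 2 * ang_mom x y s / sqrt (Wf h x y z s)) + Psi (z s)).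
        -- ring.
        -- rewrite e2. ring.
  - intros (Phi & eps & HPhi & He & HK).
    exists (-eps). split; [destruct He; [right|left]; lra|].
    intros s t Hs. destruct (adm_z1 _ _ _ _ _ _ Ha Hs) as [zp nz].
    assert (Heq : forall u, in_I a b u -> Phi (z u) = eps * (z u ^ 2 * ang_mom x y u / sqrt (Wf h x y z u))).
    { intros u Hu. destruct (adm_z1 _ _ _ _ _ _ Ha Hu) as [zpu _].
      destruct (geo_formula h a b x y z Ha u 0 Hu) as (Wp & _ & _).
      apply (Phi_of h (z u) (ang_mom x y u) eps (Wf h x y z u)); auto. }
    pose proof (deriv_comp_z Phi _ z s zp (adm_dz a b x y z Ha s Hs) HPhi) as D1.
    pose proof (deriv_fa h a b x y z Ha s t Hs) as D2.
    assert (D3 : is_derive (fun u => Phi (z u)) s (eps * (-(2 * z s * Derive z s * mean_curv (Xh h x y z) s t)))).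
    { apply (is_derive_ext_loc (fun u => eps * (z u ^ 2 * ang_mom x y u / sqrt (Wf h x y z u)))).
      - apply (filter_imp (in_I a b)); [intros u Hu; symmetry; apply Heq; auto | apply in_I_loc; auto].
      - apply (is_derive_scal (fun u => z u ^ 2 * ang_mom x y u / sqrt (Wf h x y z u))); auto. }
    pose proof (is_derive_unique _ _ _ D1) as U1. rewrite (is_derive_unique _ _ _ D3) in U1.
    assert (E : 2 * z s * Derive z s * (H (z s) + eps * mean_curv (Xh h x y z) s t) = 0) by lra.
    assert (2 * z s * Derive z s <> 0).
    { repeat apply Rmult_integral_contrapositive_currified; lra. }
    destruct (Rmult_integral _ _ E); [contradiction|]. lra.
Qed.
End IA.

Section IB.
Variables (h : R) (Kext : R -> R).
Hypothesis Hc : forall z, 0 < z -> continuous Kext z.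
Hypothesis h0 : 0 <= h.
Hypothesis h1 : h <> 1.

Theorem iff_b a b x y z : admissible_profile a b x y z ->
  (has_ext_curvature h a b x y z Kext <->
   exists B : R -> R,
     antideriv (fun z => 2 * z * Kext z) B /\
     forall s, in_I a b s ->
       z s ^ 2 + h ^ 2 * B (z s) <> 0 /\ 0 <= RB h B (z s) /\
       (ang_mom x y s = sqrt (RB h B (z s)) \/ ang_mom x y s = - sqrt (RB h B (z s)))).
Proof.
  intros Ha. assert (hh : h^2 <> 1) by (intro C; apply h1; nra). split.
  - intros Hm.
    destruct (antideriv_exists _ (cont_2z Kext Hc)) as [Psi HPsi].
    set (g := fun u => (ang_mom x y u ^ 2 - 1) * z u ^ 2 / Wf h x y z u - Psi (z u)).
    assert (Hg : forall u, in_I a b u -> is_derive g u 0).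
    { intros u Hu. destruct (adm_z1 _ _ _ _ _ _ Ha Hu) as [zp _].
      pose proof (deriv_fb h a b x y z Ha u 0 Hu) as D1.
      pose proof (deriv_comp_z Psi _ z u zp (adm_dz a b x y z Ha u Hu) HPsi) as D2.
      pose proof (Hm u 0 Hu) as Hmu.
      unfold g. replace 0 with ((2 * z u * Derive z u * ext_curv (Xh h x y z) u 0)
                               - (2 * z u * Kext (z u) * Derive z u)).
      + apply (is_derive_minus (fun u => (ang_mom x y u ^ 2 - 1) * z u ^ 2 / Wf h x y z u)
                 (fun u => Psi (z u))); auto.
      + rewrite Hmu. ring. }
    destruct (in_I_ex a b (proj1 Ha)) as [s0 Hs0].
    set (c := g s0).
    exists (fun w => Psi w + c). split.
    + intros w Hw. pose proof (HPsi w Hw) as D.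
      assert (eD : ex_derive Psi w) by (eexists; eauto).
      auto_derive; auto. etaf. rewrite (is_derive_unique _ _ _ D). ring.
    + intros s Hs. destruct (adm_z1 _ _ _ _ _ _ Ha Hs) as [zp _].
      destruct (geo_formula h a b x y z Ha s 0 Hs) as (Wp & _ & _).
      assert (Hgs : g s = c) by (apply (const_on_I a b g Hg); auto).
      destruct (B_of1 h (z s) (ang_mom x y s) (Wf h x y z s) (fun w => Psi w + c)) as [N1 N2]; auto.
      { rewrite <- Hgs. unfold g. ring. }
      split; [auto|split].
      * rewrite N2. nra.
      * rewrite N2. rewrite <- Rsqr_pow2, sqrt_Rsqr_abs. unfold Rabs. destruct (Rcase_abs (ang_mom x y s)); [right|left]; lra.
  - intros (B & HB & HS) s t Hs. destruct (adm_z1 _ _ _ _ _ _ Ha Hs) as [zp nz].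
    assert (Heq : forall u, in_I a b u -> B (z u) = (ang_mom x y u ^ 2 - 1) * z u ^ 2 / Wf h x y z u).
    { intros u Hu. destruct (adm_z1 _ _ _ _ _ _ Ha Hu) as [zpu _].
      destruct (geo_formula h a b x y z Ha u 0 Hu) as (Wp & _ & _).
      destruct (HS u Hu) as (N1 & N2 & N3).
      apply (B_of2 h (z u) (ang_mom x y u) (Wf h x y z u)); auto.
      assert (sq : sqrt (RB h B (z u)) * sqrt (RB h B (z u)) = RB h B (z u)) by (apply sqrt_sqrt; auto).
      destruct N3 as [N3|N3]; rewrite N3; rewrite <- sq at 1; ring. }
    pose proof (deriv_comp_z B _ z s zp (adm_dz a b x y z Ha s Hs) HB) as D1.
    pose proof (deriv_fb h a b x y z Ha s t Hs) as D2.
    assert (D3 : is_derive (fun u => B (z u)) s (2 * z s * Derive z s * ext_curv (Xh h x y z) s t)).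
    { apply (is_derive_ext_loc (fun u => (ang_mom x y u ^ 2 - 1) * z u ^ 2 / Wf h x y z u)); auto.
      apply (filter_imp (in_I a b)); [intros u Hu; symmetry; apply Heq; auto | apply in_I_loc; auto]. }
    pose proof (is_derive_unique _ _ _ D1) as U1. rewrite (is_derive_unique _ _ _ D3) in U1.
    assert (E : 2 * z s * Derive z s * (Kext (z s) - ext_curv (Xh h x y z) s t) = 0) by lra.
    assert (2 * z s * Derive z s <> 0).
    { repeat apply Rmult_integral_contrapositive_currified; lra. }
    destruct (Rmult_integral _ _ E); [contradiction|]. lra.
Qed.
End IB.

Lemma is_derive_cont_pt (f : R -> R) x l : is_derive f x l -> continuity_pt f x.
Proof.
  intros H. apply continuity_pt_filterlim. apply (ex_derive_continuous f x). eexists; eauto.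
Qed.

Lemma INV (f df : R -> R) lb ub : lb < ub ->
  (forall w, lb <= w <= ub -> is_derive f w (df w) /\ 0 < df w) ->
  exists g : R -> R,
    (forall s, f lb <= s <= f ub -> lb <= g s <= ub /\ f (g s) = s) /\
    (forall w, lb <= w <= ub -> g (f w) = w) /\
    (forall s, f lb < s < f ub -> is_derive g s (/ df (g s))) /\
    (forall x y, lb <= x -> x < y -> y <= ub -> f x < f y).
Proof.
  intros Hlt Hd.
  assert (incr : forall x y, lb <= x -> x < y -> y <= ub -> f x < f y).
  { intros x y Hx Hxy Hy. destruct (MVT_cor2 f df x y Hxy) as (c & Hc & Hc2).
    - intros c Hc. apply is_derive_Reals. apply Hd. lra.
    - assert (0 < df c) by (apply Hd; lra). nra. }
  assert (cont : forall a, lb <= a <= ub -> continuity_pt f a).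
  { intros a Ha. apply (is_derive_cont_pt f a (df a)). apply Hd; auto. }
  set (g := fun s => epsilon (inhabits lb) (fun w => lb <= w <= ub /\ f w = s)).
  assert (Hg : forall s, f lb <= s <= f ub -> lb <= g s <= ub /\ f (g s) = s).
  { intros s Hs. unfold g. apply epsilon_spec.
    destruct (f_interv_is_interv f lb ub s Hlt Hs cont) as [w Hw]. exists w; auto. }
  assert (inj : forall x y, lb <= x <= ub -> lb <= y <= ub -> f x = f y -> x = y).
  { intros x y Hx Hy Hf. destruct (Rtotal_order x y) as [H|[H|H]]; auto.
    - pose proof (incr x y (proj1 Hx) H (proj2 Hy)); lra.
    - pose proof (incr y x (proj1 Hy) H (proj2 Hx)); lra. }
  assert (flt : f lb < f ub) by (apply incr; lra).
  assert (Hgf : forall w, lb <= w <= ub -> g (f w) = w).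
  { intros w Hw. assert (Hs : f lb <= f w <= f ub).
    { destruct (Req_dec w lb); [subst; lra|]. destruct (Req_dec w ub); [subst; lra|].
      split; apply Rlt_le; apply incr; lra. }
    destruct (Hg _ Hs) as [H1 H2]. apply inj; auto. }
  exists g. split; [auto|split; [auto|split; [|auto]]].
  intros s Hs.
  assert (Prf : forall a, g (f lb) <= a <= g (f ub) -> derivable_pt f a).
  { intros a Ha. rewrite !Hgf in Ha by lra. exists (df a). apply is_derive_Reals. apply Hd; auto. }
  assert (Prg : continuity_pt g s).
  { apply (continuity_pt_recip_interv f g lb ub Hlt incr); auto.
    - intros x Hx1 Hx2. unfold comp, id. apply Hg; lra.
    - intros x Hx1 Hx2. apply Hg; lra. }
  assert (Hgs : lb <= g s <= ub) by (apply Hg; lra).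
  assert (Prg_incr : g (f lb) <= g s <= g (f ub)) by (rewrite !Hgf by lra; auto).
  assert (Hdf : derive_pt f (g s) (Prf (g s) Prg_incr) = df (g s)).
  { apply derive_pt_eq_0. apply is_derive_Reals. apply Hd; auto. }
  assert (dpos : 0 < df (g s)) by (apply Hd; auto).
  pose proof (derivable_pt_lim_recip_interv f g (f lb) (f ub) s Prf Prg flt Hs Prg_incr) as R.
  rewrite Hdf in R. apply is_derive_Reals. replace (/ df (g s)) with (1 / df (g s)) by (field; lra).
  apply R.
  - intros x Hx. unfold comp, id. apply Hg; auto.
  - lra.
Qed.

Lemma incr_of_deriv (f df : R -> R) lb ub :
  (forall w, lb <= w <= ub -> is_derive f w (df w) /\ 0 < df w) ->
  forall x y, lb <= x -> x < y -> y <= ub -> f x < f y.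
Proof.
  intros Hd x y Hx Hxy Hy. destruct (MVT_cor2 f df x y Hxy) as (c & Hc & Hc2).
  - intros c Hc. apply is_derive_Reals. apply Hd. lra.
  - assert (0 < df c) by (apply Hd; lra). nra.
Qed.

Lemma Zuniq_pos (Z1 Z2 G : R -> R) m u M : m < 0 -> 0 < u -> u < M ->
  (forall v, m <= v <= M -> is_derive Z1 v (G (Z1 v)) /\ 0 < G (Z1 v)) ->
  (forall v, m <= v <= M -> is_derive Z2 v (G (Z2 v)) /\ 0 < G (Z2 v)) ->
  Z1 0 = Z2 0 -> Z1 u = Z2 u.
Proof.
  intros Hm Hu HM H1 H2 H0.
  destruct (INV Z2 (fun v => G (Z2 v)) m M ltac:(lra) H2) as (T & HT1 & HT2 & HT3 & inc2).
  pose proof (incr_of_deriv Z1 (fun v => G (Z1 v)) m M H1) as inc1.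
  assert (le1 : forall x y, m <= x -> x <= y -> y <= M -> Z1 x <= Z1 y).
  { intros x y Hx Hxy Hy. destruct (Req_dec x y); [subst; lra|]. apply Rlt_le, inc1; lra. }
  assert (step : forall v, 0 <= v <= u -> (forall w, 0 <= w <= v -> Z1 w < Z2 M) -> Z1 v = Z2 v).
  { intros v Hv Hb.
    assert (rng : forall w, 0 <= w <= v -> Z2 m < Z1 w < Z2 M).
    { intros w Hw. split; [|apply Hb; auto].
      apply Rlt_le_trans with (Z2 0); [apply inc2; lra|]. rewrite <- H0. apply le1; lra. }
    set (phi := fun w => T (Z1 w) - w).
    assert (dphi : forall w, 0 <= w <= v -> is_derive phi w 0).
    { intros w Hw. destruct (rng w Hw) as [r1 r2].
      destruct (H1 w ltac:(lra)) as [d1 p1].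
      pose proof (HT3 (Z1 w) (conj r1 r2)) as dT.
      destruct (HT1 (Z1 w) ltac:(lra)) as [_ e].
      rewrite e in dT.
      unfold phi. replace 0 with (scal (G (Z1 w)) (/ G (Z1 w)) - 1).
      - apply (is_derive_minus (fun w => T (Z1 w)) (fun w => w)).
        + apply (is_derive_comp T Z1); auto.
        + apply (is_derive_id w).
      - unfold scal; simpl; unfold mult; simpl. field. lra. }
    assert (E : phi v = phi 0).
    { destruct (Req_dec v 0); [subst; auto|].
      destruct (MVT_cor2 phi (fun _ => 0) 0 v ltac:(lra)) as (c & Hc & _).
      - intros c Hc. apply is_derive_Reals, dphi. lra.
      - lra. }
    unfold phi in E. rewrite H0, HT2 in E by lra.
    assert (Tv : T (Z1 v) = v) by lra.
    destruct (rng v ltac:(lra)) as [r1 r2].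
    destruct (HT1 (Z1 v) ltac:(lra)) as [_ e]. rewrite Tv in e. auto. }
  assert (bnd : Z1 u < Z2 M).
  { destruct (Rlt_le_dec (Z1 u) (Z2 M)) as [L|L]; auto. exfalso.
    assert (c1 : forall a, 0 <= a <= u -> continuity_pt Z1 a).
    { intros a Ha. apply (is_derive_cont_pt Z1 a (G (Z1 a))). apply H1; lra. }
    assert (Z2 u < Z2 M) by (apply inc2; lra).
    assert (Z2 0 < Z2 u) by (apply inc2; lra).
    destruct (f_interv_is_interv Z1 0 u (Z2 u) Hu ltac:(lra) c1) as [v0 [Hv0 Ev0]].
    assert (S : Z1 v0 = Z2 v0).
    { apply step; auto. intros w Hw. apply Rle_lt_trans with (Z1 v0); [apply le1; lra| lra]. }
    assert (v0 = u).
    { destruct (Rtotal_order v0 u) as [L1|[L1|L1]]; auto.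
      - assert (Z2 v0 < Z2 u) by (apply inc2; lra). lra.
      - lra. }
    subst v0. lra. }
  apply step; [lra|]. intros w Hw. apply Rle_lt_trans with (Z1 u); [apply le1; lra | auto].
Qed.

Lemma Zuniq (Z1 Z2 G : R -> R) m u M : m < 0 -> 0 < M -> m < u < M ->
  (forall v, m <= v <= M -> is_derive Z1 v (G (Z1 v)) /\ 0 < G (Z1 v)) ->
  (forall v, m <= v <= M -> is_derive Z2 v (G (Z2 v)) /\ 0 < G (Z2 v)) ->
  Z1 0 = Z2 0 -> Z1 u = Z2 u.
Proof.
  intros Hm HM Hu H1 H2 H0.
  destruct (Rtotal_order u 0) as [L|[L|L]].
  - set (R1 := fun v => - Z1 (- v)). set (R2 := fun v => - Z2 (- v)).
    set (G' := fun w => G (- w)).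
    assert (K : forall Z, (forall v, m <= v <= M -> is_derive Z v (G (Z v)) /\ 0 < G (Z v)) ->
       forall v, -M <= v <= -m -> is_derive (fun v => - Z (- v)) v (G' (- Z (- v))) /\ 0 < G' (- Z (- v))).
    { intros Z HZ v Hv. unfold G'. rewrite Ropp_involutive. destruct (HZ (-v) ltac:(lra)) as [d p].
      split; auto.
      replace (G (Z (- v))) with (opp (scal (-1) (G (Z (-v))))) by (unfold opp, scal; simpl; unfold mult; simpl; ring).
      apply (is_derive_opp (fun v => Z (- v))).
      assert (Hn : is_derive (fun v : R => - v) v (-1)) by (auto_derive; auto; ring).
      apply (is_derive_comp Z (fun v => - v)); auto. }
    assert (E : R1 (- u) = R2 (- u)).
    { apply (Zuniq_pos R1 R2 G' (-M) (-u) (-m)); try lra.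
      - apply K; auto.
      - apply K; auto.
      - unfold R1, R2. rewrite Ropp_0, H0. auto. }
    unfold R1, R2 in E. rewrite Ropp_involutive in E. lra.
  - subst; auto.
  - apply (Zuniq_pos Z1 Z2 G m u M); auto. lra.
Qed.

Lemma K2_rel a b x y z s : admissible_profile a b x y z -> in_I a b s ->
  ang_mom x y s ^ 2 = 1 - z s ^ 2 - Derive z s ^ 2.
Proof.
  intros Ha Hs. destruct (proj2 Ha s Hs) as (r0 & _ & _ & _ & _ & _ & _ & _ & _ & _ & _ & r1 & _).
  destruct (adm_rel a b x y z Ha s Hs) as [d0 _]. unfold ang_mom.
  apply Rminus_diag_eq in r0. apply Rminus_diag_eq in r1. apply Rminus_diag_eq in d0.
  set (X := x s) in *. set (Y := y s) in *. set (Z := z s) in *.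
  set (X1 := Derive x s) in *. set (Y1 := Derive y s) in *. set (Z1 := Derive z s) in *.
  lc ((X^2+Y^2+Z^2-1)*(1 - Z1^2 + (X1^2+Y1^2+Z1^2-1)) + (1-Z^2)*(X1^2+Y1^2+Z1^2-1)
        + 2*(X*X1+Y*Y1+Z*Z1-0)*Z*Z1 - (X*X1+Y*Y1+Z*Z1-0)*(X*X1+Y*Y1+Z*Z1-0)).
  rewrite r0, r1, d0. ring.
Qed.

Lemma sign_const a b x y z u v : admissible_profile a b x y z -> in_I a b u -> in_I a b v ->
  0 < Derive z u * Derive z v.
Proof.
  intros Ha.
  assert (nz : forall w, in_I a b w -> Derive z w <> 0) by (intros w Hw; apply (proj2 Ha w Hw)).
  assert (ct : forall w, in_I a b w -> continuity_pt (Derive z) w).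
  { intros w Hw. apply (is_derive_cont_pt _ w (Derive (Derive z) w)). apply Derive_correct.
    apply (proj2 Ha w Hw). }
  assert (K : forall u v, in_I a b u -> in_I a b v -> u < v -> 0 < Derive z u * Derive z v).
  { intros p q Hp Hq Hpq.
    destruct (Rlt_or_le 0 (Derive z p * Derive z q)) as [L|L]; auto. exfalso.
    assert (Hp0 := nz p Hp). assert (Hq0 := nz q Hq).
    destruct (Rlt_or_le (Derive z p) 0) as [L1|L1].
    - assert (0 < Derive z q).
      { destruct (Rlt_or_le 0 (Derive z q)); auto. destruct (Req_dec (Derive z q) 0); [contradiction|]. nra. }
      destruct (IVT_interv (Derive z) p q) as [w [Hw Ew]]; auto.
      + intros c Hc. apply ct. apply (in_I_between a b p q); auto.
      + apply (nz w); auto. apply (in_I_between a b p q); auto.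
    - assert (0 < Derive z p) by (destruct (Req_dec (Derive z p) 0); [contradiction|lra]).
      assert (Derive z q < 0) by (destruct (Rlt_or_le (Derive z q) 0); auto; nra).
      destruct (IVT_interv (fun w => - Derive z w) p q) as [w [Hw Ew]]; auto.
      + intros c Hc. apply continuity_pt_opp. apply ct. apply (in_I_between a b p q); auto.
      + lra.
      + lra.
      + apply (nz w); [apply (in_I_between a b p q); auto| lra]. }
  intros Hu Hv. destruct (Rtotal_order u v) as [L|[L|L]].
  - auto.
  - subst. assert (Hu0 := nz v Hu). apply Rsqr_pos_lt in Hu0. exact Hu0.
  - rewrite Rmult_comm. auto.
Qed.

Lemma in_I_eps a b s : in_I a b s -> exists e, 0 < e /\ forall t, Rabs (t - s) < e -> in_I a b t.
Proof.
  intros Hs. destruct (in_I_loc a b s Hs) as [e He]. exists e. split; [apply cond_pos|].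
  intros t Ht. apply He. exact Ht.
Qed.

Lemma const_on_conv (S : R -> Prop) (f : R -> R) :
  (forall u v w, S u -> S v -> u <= w <= v -> S w) ->
  (forall u, S u -> is_derive f u 0) ->
  forall u v, S u -> S v -> f u = f v.
Proof.
  intros Sc Hd.
  assert (K : forall u v, S u -> S v -> u < v -> f u = f v).
  { intros u v Hu Hv Huv.
    destruct (MVT_cor2 f (fun _ => 0) u v Huv) as (c & Hc & _).
    - intros c Hc. apply is_derive_Reals. apply Hd. apply (Sc u v); auto.
    - lra. }
  intros u v Hu Hv. destruct (Rtotal_order u v) as [H|[H|H]].
  - auto.
  - subst; auto.
  - symmetry; auto.
Qed.

Lemma is_derive_shift (f : R -> R) c v : ex_derive f (c + v) ->
  is_derive (fun v => f (c + v)) v (Derive f (c + v)).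
Proof. intros H. auto_derive; auto. etaf. ring. Qed.

Lemma exists_angle cA sA : cA^2 + sA^2 = 1 -> exists al, cos al = cA /\ sin al = sA.
Proof.
  intros H. assert (Hb : -1 <= cA <= 1) by (split; nra).
  assert (Hs : sqrt (1 - cA²) = Rabs sA).
  { rewrite <- sqrt_Rsqr_abs. f_equal. unfold Rsqr. nra. }
  destruct (Rle_or_lt 0 sA) as [L|L].
  - exists (acos cA). rewrite cos_acos, sin_acos by auto. rewrite Hs, Rabs_right; auto; lra.
  - exists (- acos cA). rewrite cos_neg, sin_neg, cos_acos, sin_acos by auto. rewrite Hs, Rabs_left; auto; lra.
Qed.

Lemma pp_pos a b : 0 < a * b -> 0 < a -> 0 < 1 * b.
Proof.
  intros H Ha. rewrite Rmult_1_l. destruct (Rlt_or_le 0 b) as [L|L]; auto.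
  assert (a * b <= 0) by (apply Rmult_le_0_l; lra). lra.
Qed.
Lemma pp_neg a b : 0 < a * b -> a <= 0 -> 0 < -1 * b.
Proof.
  intros H Ha. destruct (Rlt_or_le b 0) as [L|L]; [lra|].
  assert (a * b <= 0) by (apply Rmult_le_0_r; lra). lra.
Qed.

Lemma xy_rel a b x y z s : admissible_profile a b x y z -> in_I a b s ->
  x s ^ 2 + y s ^ 2 = 1 - z s ^ 2 /\ Derive x s * (1 - z s ^ 2) = -(z s * Derive z s) * x s + ang_mom x y s * y s /\ Derive y s * (1 - z s ^ 2) = -(z s * Derive z s) * y s - ang_mom x y s * x s.
Proof.
  intros Ha Hs. destruct (proj2 Ha s Hs) as (r0 & _).
  destruct (adm_rel a b x y z Ha s Hs) as [d0 _].
  assert (E : x s ^ 2 + y s ^ 2 = 1 - z s ^ 2) by lra.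
  split; [auto|]. rewrite <- E. unfold ang_mom.
  replace (-(z s * Derive z s)) with (x s * Derive x s + y s * Derive y s) by lra.
  split; ring.
Qed.

Theorem c0_uniq h : c0_uniqueness h.
Proof.
  unfold c0_uniqueness.
  intros F a1 b1 a2 b2 x1 y1 z1 x2 y2 z2 s1 s2 A1 A2 HF1 HF2 Hs1 Hs2 Hz Hsg.
  set (D := fun u => in_I a1 b1 (s1+u) /\ in_I a2 b2 (s2+u)).
  assert (Dconv : forall u v w, D u -> D v -> u <= w <= v -> D w).
  { intros u v w [Hu1 Hu2] [Hv1 Hv2] Hw. split.
    - apply (in_I_between a1 b1 (s1+u) (s1+v)); auto; lra.
    - apply (in_I_between a2 b2 (s2+u) (s2+v)); auto; lra. }
  assert (D0 : D 0) by (unfold D; rewrite !Rplus_0_r; auto).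
  set (sg := if Rlt_dec 0 (Derive z1 s1) then 1 else -1).
  assert (sg2 : sg * sg = 1) by (unfold sg; destruct Rlt_dec; ring).
  assert (sgn1 : forall v, in_I a1 b1 (s1+v) -> 0 < sg * Derive z1 (s1+v)).
  { intros v Hv. pose proof (sign_const a1 b1 x1 y1 z1 s1 (s1+v) A1 Hs1 Hv).
    unfold sg; destruct Rlt_dec as [L|L]; [|apply Rnot_lt_le in L].
    - eapply pp_pos; eauto.
    - eapply pp_neg; eauto. }
  assert (sgn2 : forall v, in_I a2 b2 (s2+v) -> 0 < sg * Derive z2 (s2+v)).
  { intros v Hv. pose proof (sign_const a2 b2 x2 y2 z2 s2 (s2+v) A2 Hs2 Hv).
    unfold sg; destruct Rlt_dec as [L|L]; [|apply Rnot_lt_le in L].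
    - assert (0 < 1 * Derive z2 s2) by (eapply pp_pos; eauto). eapply pp_pos; eauto; lra.
    - assert (0 < -1 * Derive z2 s2) by (eapply pp_neg; eauto). eapply pp_neg; eauto; lra. }
  set (g := fun w => sqrt (1 - w^2 - F w^2)).
  assert (Hd : forall a b x y z s, admissible_profile a b x y z -> in_I a b s ->
             (forall s, in_I a b s -> ang_mom x y s = F (z s)) -> 0 < sg * Derive z s ->
             sg * Derive z s = g (z s)).
  { intros a b x y z s A Hs HF Hp. unfold g. rewrite <- (HF s Hs), (K2_rel a b x y z s A Hs).
    replace (1 - z s ^ 2 - (1 - z s ^ 2 - Derive z s ^ 2)) with ((sg * Derive z s)^2).
    - rewrite sqrt_pow2; lra.
    - transitivity ((sg*sg) * Derive z s ^ 2); [ring|rewrite sg2; ring]. }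
  assert (Zeq : forall u, D u -> z1 (s1+u) = z2 (s2+u)).
  { intros u [Hu1 Hu2].
    destruct (in_I_eps _ _ _ Hs1) as (e1 & e1p & He1).
    destruct (in_I_eps _ _ _ Hs2) as (e2 & e2p & He2).
    destruct (in_I_eps _ _ _ Hu1) as (e3 & e3p & He3).
    destruct (in_I_eps _ _ _ Hu2) as (e4 & e4p & He4).
    set (e := Rmin (Rmin e1 e2) (Rmin e3 e4)).
    assert (ep : 0 < e) by (unfold e; repeat apply Rmin_glb_lt; auto).
    assert (e1' : e <= e1) by (unfold e; eapply Rle_trans; [apply Rmin_l|apply Rmin_l]).
    assert (e2' : e <= e2) by (unfold e; eapply Rle_trans; [apply Rmin_l|apply Rmin_r]).
    assert (e3' : e <= e3) by (unfold e; eapply Rle_trans; [apply Rmin_r|apply Rmin_l]).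
    assert (e4' : e <= e4) by (unfold e; eapply Rle_trans; [apply Rmin_r|apply Rmin_r]).
    set (m := Rmin 0 u - e/2). set (M := Rmax 0 u + e/2).
    assert (Dm : D m).
    { unfold m, Rmin; destruct Rle_dec; split.
      - apply He1. replace (s1 + (0 - e/2) - s1) with (-(e/2)) by ring. rewrite Rabs_Ropp, Rabs_right; lra.
      - apply He2. replace (s2 + (0 - e/2) - s2) with (-(e/2)) by ring. rewrite Rabs_Ropp, Rabs_right; lra.
      - apply He3. replace (s1 + (u - e/2) - (s1 + u)) with (-(e/2)) by ring. rewrite Rabs_Ropp, Rabs_right; lra.
      - apply He4. replace (s2 + (u - e/2) - (s2 + u)) with (-(e/2)) by ring. rewrite Rabs_Ropp, Rabs_right; lra. }
    assert (DM : D M).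
    { unfold M, Rmax; destruct Rle_dec; split.
      - apply He3. replace (s1 + (u + e/2) - (s1 + u)) with (e/2) by ring. rewrite Rabs_right; lra.
      - apply He4. replace (s2 + (u + e/2) - (s2 + u)) with (e/2) by ring. rewrite Rabs_right; lra.
      - apply He1. replace (s1 + (0 + e/2) - s1) with (e/2) by ring. rewrite Rabs_right; lra.
      - apply He2. replace (s2 + (0 + e/2) - s2) with (e/2) by ring. rewrite Rabs_right; lra. }
    assert (mM : m < 0 /\ 0 < M /\ m < u < M).
    { unfold m, M. pose proof (Rmin_l 0 u). pose proof (Rmin_r 0 u).
      pose proof (Rmax_l 0 u). pose proof (Rmax_r 0 u). lra. }
    set (Y1 := fun v => sg * z1 (s1 + v)). set (Y2 := fun v => sg * z2 (s2 + v)).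
    set (G := fun w => g (sg * w)).
    assert (HY : forall a b x y z s (Y : R -> R), admissible_profile a b x y z ->
               (forall s, in_I a b s -> ang_mom x y s = F (z s)) ->
               Y = (fun v => sg * z (s + v)) ->
               (forall v, in_I a b (s + v) -> 0 < sg * Derive z (s + v)) ->
               forall v, in_I a b (s + v) -> is_derive Y v (G (Y v)) /\ 0 < G (Y v)).
    { intros a b x y z s Y A HF EY Hsg' v Hv.
      assert (GY : G (Y v) = sg * Derive z (s + v)).
      { unfold G. rewrite EY. replace (sg * (sg * z (s + v))) with (z (s+v))
          by (transitivity ((sg*sg) * z (s+v)); [rewrite sg2; ring|ring]).
        symmetry. apply (Hd a b x y z); auto. }
      rewrite GY. split; [|auto]. rewrite EY.
      apply (is_derive_scal (fun v => z (s + v))). apply is_derive_shift.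
      apply (proj2 A (s+v) Hv). }
    assert (E : Y1 u = Y2 u).
    { apply (Zuniq Y1 Y2 G m u M); try tauto.
      - intros v Hv. apply (HY a1 b1 x1 y1 z1 s1 Y1 A1 HF1 eq_refl sgn1). apply (Dconv m M v Dm DM Hv).
      - intros v Hv. apply (HY a2 b2 x2 y2 z2 s2 Y2 A2 HF2 eq_refl sgn2). apply (Dconv m M v Dm DM Hv).
      - unfold Y1, Y2. rewrite !Rplus_0_r, Hz. auto. }
    unfold Y1, Y2 in E. transitivity ((sg*sg) * z1 (s1+u)); [rewrite sg2; ring|].
    rewrite Rmult_assoc, E. transitivity ((sg*sg) * z2 (s2+u)); [ring|rewrite sg2; ring]. }
  assert (Z'eq : forall u, D u -> Derive z1 (s1+u) = Derive z2 (s2+u)).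
  { intros u Hu. destruct Hu as [Hu1 Hu2].
    pose proof (Hd a1 b1 x1 y1 z1 (s1+u) A1 Hu1 HF1 (sgn1 u Hu1)) as E1.
    pose proof (Hd a2 b2 x2 y2 z2 (s2+u) A2 Hu2 HF2 (sgn2 u Hu2)) as E2.
    rewrite <- (Zeq u) in E2 by (split; auto).
    transitivity ((sg*sg) * Derive z1 (s1+u)); [rewrite sg2; ring|].
    transitivity ((sg*sg) * Derive z2 (s2+u)); [|rewrite sg2; ring].
    rewrite !Rmult_assoc. f_equal. lra. }
  set (r := fun v => 1 - z1 (s1+v)^2).
  assert (rpos : forall u, D u -> 0 < r u).
  { intros u [Hu1 _]. unfold r. pose proof (K2_rel a1 b1 x1 y1 z1 (s1+u) A1 Hu1) as K.
    assert (Derive z1 (s1+u) <> 0) by apply (proj2 A1 (s1+u) Hu1).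
    assert (0 < Derive z1 (s1+u) ^ 2).
    { replace (Derive z1 (s1+u) ^ 2) with (Rsqr (Derive z1 (s1+u))) by (unfold Rsqr; ring).
      apply Rsqr_pos_lt; auto. }
    nra. }
  set (P := fun v => x1 (s1+v) * x2 (s2+v) + y1 (s1+v) * y2 (s2+v)).
  set (Q := fun v => x1 (s1+v) * y2 (s2+v) - y1 (s1+v) * x2 (s2+v)).
  assert (PQd : forall u, D u -> is_derive (fun v => P v / r v) u 0 /\ is_derive (fun v => Q v / r v) u 0).
  { intros u Hu. pose proof (rpos u Hu) as rp. destruct Hu as [Hu1 Hu2].
    destruct (proj2 A1 (s1+u) Hu1) as (_ & _ & ex1 & ey1 & ez1 & _).
    destruct (proj2 A2 (s2+u) Hu2) as (_ & _ & ex2 & ey2 & ez2 & _).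
    destruct (xy_rel a1 b1 x1 y1 z1 (s1+u) A1 Hu1) as (_ & rx1 & ry1).
    destruct (xy_rel a2 b2 x2 y2 z2 (s2+u) A2 Hu2) as (_ & rx2 & ry2).
    pose proof (Zeq u (conj Hu1 Hu2)) as ZE. pose proof (Z'eq u (conj Hu1 Hu2)) as ZE'.
    rewrite HF1 in rx1, ry1 by auto. rewrite HF2 in rx2, ry2 by auto.
    rewrite <- ZE, <- ZE' in rx2, ry2.
    unfold r in rp.
    set (Z := z1 (s1+u)) in *. set (Z' := Derive z1 (s1+u)) in *.
    assert (eX1 : Derive x1 (s1+u) = (-(Z*Z')*x1 (s1+u) + F Z * y1 (s1+u))/(1 - Z^2)) by (rewrite <- rx1; field; lra).
    assert (eY1 : Derive y1 (s1+u) = (-(Z*Z')*y1 (s1+u) - F Z * x1 (s1+u))/(1 - Z^2)) by (rewrite <- ry1; field; lra).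
    assert (eX2 : Derive x2 (s2+u) = (-(Z*Z')*x2 (s2+u) + F Z * y2 (s2+u))/(1 - Z^2)) by (rewrite <- rx2; field; lra).
    assert (eY2 : Derive y2 (s2+u) = (-(Z*Z')*y2 (s2+u) - F Z * x2 (s2+u))/(1 - Z^2)) by (rewrite <- ry2; field; lra).
    unfold P, Q, r. split; auto_derive. { repeat split; auto. fold Z. replace (1 + - (Z * (Z * 1))) with (1 - Z^2) by ring. lra. } 2: { repeat split; auto. fold Z. replace (1 + - (Z * (Z * 1))) with (1 - Z^2) by ring. lra. } all: etaf; fold Z Z'; rewrite eX1, eY1, eX2, eY2; field; lra. }
  assert (Pc : forall u, D u -> P u / r u = P 0 / r 0).
  { intros u Hu. apply (const_on_conv D (fun v => P v / r v) Dconv); auto. intros v Hv; apply PQd; auto. }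
  assert (Qc : forall u, D u -> Q u / r u = Q 0 / r 0).
  { intros u Hu. apply (const_on_conv D (fun v => Q v / r v) Dconv); auto. intros v Hv; apply PQd; auto. }
  destruct (exists_angle (P 0 / r 0) (Q 0 / r 0)) as (al & Hc & Hs).
  { pose proof (rpos 0 D0) as rp.
    destruct (xy_rel a1 b1 x1 y1 z1 (s1+0) A1 (proj1 D0)) as (n1 & _).
    destruct (xy_rel a2 b2 x2 y2 z2 (s2+0) A2 (proj2 D0)) as (n2 & _).
    rewrite <- (Zeq 0 D0) in n2. unfold r in *.
    transitivity ((P 0 ^2 + Q 0 ^2) / r 0 ^2); [unfold r; field; lra|].
    replace (P 0 ^ 2 + Q 0 ^ 2) with ((x1 (s1+0)^2 + y1 (s1+0)^2) * (x2 (s2+0)^2 + y2 (s2+0)^2)) by (unfold P, Q; ring).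
    rewrite n1, n2. unfold r. field. lra. }
  exists al. intros u t Hu1 Hu2.
  assert (Hu : D u) by (split; auto).
  pose proof (rpos u Hu) as rp. pose proof (Pc u Hu) as Pu. pose proof (Qc u Hu) as Qu.
  rewrite <- Hc in Pu. rewrite <- Hs in Qu.
  destruct (xy_rel a1 b1 x1 y1 z1 (s1+u) A1 Hu1) as (n1 & _).
  assert (ex2 : x2 (s2+u) = x1 (s1+u) * cos al - y1 (s1+u) * sin al).
  { rewrite <- Pu, <- Qu. unfold P, Q. unfold r in *. rewrite <- n1. field. unfold r in rp. lra. }
  assert (ey2 : y2 (s2+u) = x1 (s1+u) * sin al + y1 (s1+u) * cos al).
  { rewrite <- Pu, <- Qu. unfold P, Q. unfold r in *. rewrite <- n1. field. unfold r in rp. lra. }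
  unfold Xh, transl_c0; simpl. rewrite ex2, ey2, <- (Zeq u Hu). f_equal; ring.
Qed.

Lemma cont_mult (f g : R -> R) w : continuous f w -> continuous g w -> continuous (fun t => f t * g t) w.
Proof. intros; apply (continuous_mult f g); auto. Qed.
Lemma cont_plus (f g : R -> R) w : continuous f w -> continuous g w -> continuous (fun t => f t + g t) w.
Proof. intros; apply (continuous_plus f g); auto. Qed.
Lemma cont_opp (f : R -> R) w : continuous f w -> continuous (fun t => - f t) w.
Proof. intros; apply (continuous_opp f); auto. Qed.
Lemma cont_minus (f g : R -> R) w : continuous f w -> continuous g w -> continuous (fun t => f t - g t) w.
Proof. intros; apply (continuous_minus f g); auto. Qed.
Lemma cont_inv (f : R -> R) w : continuous f w -> f w <> 0 -> continuous (fun t => / f t) w.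
Proof. intros; apply (continuous_Rinv_comp f); auto. Qed.
Lemma cont_sqrt (f : R -> R) w : continuous f w -> continuous (fun t => sqrt (f t)) w.
Proof. intros; apply (continuous_sqrt_comp f); auto. Qed.
Lemma cont_cos (f : R -> R) w : continuous f w -> continuous (fun t => cos (f t)) w.
Proof. intros; apply (continuous_cos_comp f); auto. Qed.
Lemma cont_sin (f : R -> R) w : continuous f w -> continuous (fun t => sin (f t)) w.
Proof. intros; apply (continuous_sin_comp f); auto. Qed.
Lemma cont_const (c w : R) : continuous (fun _ : R => c) w.
Proof. apply continuous_const. Qed.
Lemma cont_id (w : R) : continuous (fun t : R => t) w.
Proof. apply continuous_id. Qed.
Lemma cont_der (f : R -> R) w l : is_derive f w l -> continuous f w.
Proof. intros H; apply (ex_derive_continuous (V:=R_NormedModule) f); eexists; eauto. Qed.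
Lemma cont_comp (f g : R -> R) w : continuous g w -> continuous f (g w) -> continuous (fun t => f (g t)) w.
Proof. intros; apply (continuous_comp g f); auto. Qed.

Definition CC1 (f f1 : R -> R) (w : R) := is_derive f w (f1 w) /\ continuous f1 w.

Lemma CC1_const c w : CC1 (fun _ => c) (fun _ => 0) w.
Proof. split; [auto_derive; auto|apply cont_const]. Qed.
Lemma CC1_id w : CC1 (fun t => t) (fun _ => 1) w.
Proof. split; [auto_derive; auto|apply cont_const]. Qed.
Lemma CC1_plus f f1 g g1 w : CC1 f f1 w -> CC1 g g1 w -> CC1 (fun t => f t + g t) (fun t => f1 t + g1 t) w.
Proof.
  intros [d1 c1] [d2 c2]. split; [|apply cont_plus; auto].
  apply (is_derive_plus f g); auto.
Qed.
Lemma CC1_minus f f1 g g1 w : CC1 f f1 w -> CC1 g g1 w -> CC1 (fun t => f t - g t) (fun t => f1 t - g1 t) w.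
Proof.
  intros [d1 c1] [d2 c2]. split; [|apply cont_minus; auto].
  apply (is_derive_minus f g); auto.
Qed.
Lemma CC1_opp f f1 w : CC1 f f1 w -> CC1 (fun t => - f t) (fun t => - f1 t) w.
Proof.
  intros [d1 c1]. split; [|apply cont_opp; auto].
  apply (is_derive_opp f); auto.
Qed.
Lemma CC1_mult f f1 g g1 w : CC1 f f1 w -> CC1 g g1 w -> CC1 (fun t => f t * g t) (fun t => f1 t * g t + f t * g1 t) w.
Proof.
  intros [d1 c1] [d2 c2]. split.
  - apply (is_derive_mult f g); auto. intros; apply Rmult_comm.
  - apply cont_plus; apply cont_mult; auto; eapply cont_der; eauto.
Qed.
Lemma CC1_inv f f1 w : CC1 f f1 w -> f w <> 0 -> CC1 (fun t => / f t) (fun t => - f1 t / (f t * f t)) w.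
Proof.
  intros [d1 c1] nz. split.
  - assert (e : ex_derive f w) by (eexists; eauto).
    auto_derive; auto. etaf. rewrite (is_derive_unique _ _ _ d1). field; auto.
  - unfold Rdiv. apply cont_mult; [apply cont_opp; auto|]. apply cont_inv.
    + apply cont_mult; eapply cont_der; eauto.
    + apply Rmult_integral_contrapositive_currified; auto.
Qed.
Lemma CC1_sqrt f f1 w : CC1 f f1 w -> 0 < f w -> CC1 (fun t => sqrt (f t)) (fun t => f1 t / (2 * sqrt (f t))) w.
Proof.
  intros [d1 c1] p. split.
  - assert (e : ex_derive f w) by (eexists; eauto).
    auto_derive; auto. etaf. rewrite (is_derive_unique _ _ _ d1). field.
    apply Rgt_not_eq, sqrt_lt_R0; auto.
  - unfold Rdiv. apply cont_mult; auto. apply cont_inv.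
    + apply cont_mult; [apply cont_const|apply cont_sqrt; eapply cont_der; eauto].
    + apply Rmult_integral_contrapositive_currified; [lra|]. apply Rgt_not_eq, sqrt_lt_R0; auto.
Qed.
Lemma CC1_ext f g f1 g1 w : (forall t, f t = g t) -> (forall t, f1 t = g1 t) -> CC1 f f1 w -> CC1 g g1 w.
Proof.
  intros E E1 [d c]. split.
  - rewrite <- E1. apply (is_derive_ext f); auto.
  - apply (continuous_ext f1); auto.
Qed.

Definition CC2 (f f1 f2 : R -> R) (s : R) :=
  is_derive f s (f1 s) /\ is_derive f1 s (f2 s) /\ continuous f2 s.

Lemma CC1_cos w : CC1 cos (fun t => - sin t) w.
Proof. split; [auto_derive; auto; ring|apply cont_opp, (cont_sin (fun t => t)), cont_id]. Qed.
Lemma CC1_msin w : CC1 (fun t => - sin t) (fun t => - cos t) w.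
Proof. split; [auto_derive; auto; ring|apply cont_opp, (cont_cos (fun t => t)), cont_id]. Qed.
Lemma CC1_sin w : CC1 sin cos w.
Proof. split; [auto_derive; auto; ring|apply (cont_cos (fun t => t)), cont_id]. Qed.
Lemma CC1_cos' w : CC1 cos (fun t => - sin t) w.
Proof. apply CC1_cos. Qed.

Lemma is_derive_comp' (phi f : R -> R) s l1 l2 :
  is_derive phi (f s) l1 -> is_derive f s l2 -> is_derive (fun t => phi (f t)) s (l1 * l2).
Proof.
  intros H1 H2. replace (l1 * l2) with (scal l2 l1) by (unfold scal; simpl; unfold mult; simpl; ring).
  apply (is_derive_comp phi f); auto.
Qed.

Lemma CC2_comp (phi phi1 phi2 f f1 f2 : R -> R) s :
  CC1 phi phi1 (f s) -> CC1 phi1 phi2 (f s) -> CC2 f f1 f2 s ->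
  CC2 (fun t => phi (f t)) (fun t => phi1 (f t) * f1 t)
     (fun t => phi2 (f t) * f1 t * f1 t + phi1 (f t) * f2 t) s.
Proof.
  intros [a1 b1] [a2 b2] (d1 & d2 & c2). split; [|split].
  - apply is_derive_comp'; auto.
  - apply (is_derive_mult (fun t => phi1 (f t)) f1).
    + apply is_derive_comp'; auto.
    + auto.
    + intros; apply Rmult_comm.
  - apply cont_plus; apply cont_mult.
    + apply cont_mult; [apply cont_comp; auto; eapply cont_der; eauto | eapply cont_der; eauto].
    + eapply cont_der; eauto.
    + apply cont_comp; [eapply cont_der; eauto|]. eapply cont_der; eauto.
    + auto.
Qed.

Lemma CC2_mult (f f1 f2 g g1 g2 : R -> R) s : CC2 f f1 f2 s -> CC2 g g1 g2 s ->
  CC2 (fun t => f t * g t) (fun t => f1 t * g t + f t * g1 t)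
     (fun t => (f2 t * g t + f1 t * g1 t) + (f1 t * g1 t + f t * g2 t)) s.
Proof.
  intros (a1 & a2 & a3) (b1 & b2 & b3). split; [|split].
  - apply (is_derive_mult f g); auto. intros; apply Rmult_comm.
  - apply (is_derive_plus (fun t => f1 t * g t) (fun t => f t * g1 t)).
    + apply (is_derive_mult f1 g); auto; intros; apply Rmult_comm.
    + apply (is_derive_mult f g1); auto; intros; apply Rmult_comm.
  - repeat apply cont_plus; apply cont_mult; auto; eapply cont_der; eauto.
Qed.

Lemma CC2_Derive a b (f f1 f2 : R -> R) :
  (forall s, in_I a b s -> CC2 f f1 f2 s) -> forall s, in_I a b s ->
  ex_derive f s /\ Derive f s = f1 s /\ ex_derive (Derive f) s /\
  Derive (Derive f) s = f2 s /\ continuous (Derive (Derive f)) s.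
Proof.
  intros HC s Hs. destruct (HC s Hs) as (d1 & d2 & c).
  assert (E1 : locally s (fun t => f1 t = Derive f t)).
  { apply (filter_imp (in_I a b)); [|apply in_I_loc; auto].
    intros t Ht. symmetry. apply is_derive_unique. apply HC; auto. }
  assert (D2 : is_derive (Derive f) s (f2 s)) by (apply (is_derive_ext_loc f1); auto).
  split; [eexists; eauto|split; [apply is_derive_unique; auto|split; [eexists; eauto|split]]].
  - apply is_derive_unique; auto.
  - apply (continuous_ext_loc _ f2); auto.
    apply (filter_imp (in_I a b)); [|apply in_I_loc; auto].
    intros t Ht. symmetry. apply is_derive_unique.
    destruct (HC t Ht) as (e1 & e2 & _).
    apply (is_derive_ext_loc f1); auto.
    apply (filter_imp (in_I a b)); [|apply in_I_loc; auto].
    intros t' Ht'. symmetry. apply is_derive_unique. apply HC; auto.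
Qed.

Lemma ball_open z0 e w : Rabs (w - z0) < e -> locally w (fun t => Rabs (t - z0) < e).
Proof.
  intros H. assert (p : 0 < e - Rabs (w - z0)) by lra.
  exists (mkposreal _ p). intros t Ht. change (Rabs (t - w) < e - Rabs (w - z0)) in Ht.
  replace (t - z0) with ((t - w) + (w - z0)) by ring.
  eapply Rle_lt_trans; [apply Rabs_triang|]. simpl in Ht. lra.
Qed.

Lemma ball_conv z0 e u v t : Rabs (u - z0) < e -> Rabs (v - z0) < e -> Rmin u v <= t <= Rmax u v ->
  Rabs (t - z0) < e.
Proof.
  intros Hu Hv Ht. apply Rabs_def2 in Hu. apply Rabs_def2 in Hv. apply Rabs_def1;
  unfold Rmin, Rmax in Ht; destruct Rle_dec; lra.
Qed.

Lemma alg_ex (Zs Fv c sn : R) : 0 < Zs < 1 -> Fv*Fv < 1 - Zs*Zs -> c^2 + sn^2 = 1 ->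
  let r := sqrt (1 - Zs*Zs) in let zp := sqrt (1 - Zs*Zs - Fv*Fv) in
  let w := - Fv * / (1 - Zs*Zs) in let R1 := (0 - (1*Zs + Zs*1)) / (2 * r) in
  (r*c)^2 + (r*sn)^2 + Zs^2 = 1 /\ (R1*zp*c + r*(-sn*w))^2 + (R1*zp*sn + r*(c*w))^2 + zp^2 = 1 /\ (R1*zp*c + r*(-sn*w))*(r*sn) - (r*c)*(R1*zp*sn + r*(c*w)) = Fv.
Proof.
  intros HZ HF Ht r zp w R1.
  assert (rp : 0 < r) by (apply sqrt_lt_R0; nra).
  assert (rr : r * r = 1 - Zs*Zs) by (apply sqrt_sqrt; nra).
  assert (zz : zp * zp = 1 - Zs*Zs - Fv*Fv) by (apply sqrt_sqrt; nra).
  assert (eR : R1 = - (Zs / r)) by (unfold R1; field; lra).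
  assert (ew : w = - Fv / (r*r)) by (unfold w; rewrite rr; field; nra).
  split; [|split].
  - transitivity ((r*r)*(c^2+sn^2) + Zs^2); [ring|]. rewrite Ht, rr. ring.
  - transitivity ((R1*zp)^2*(c^2+sn^2) + (r*w)^2*(c^2+sn^2) + zp^2); [ring|]. rewrite Ht, eR, ew.
    transitivity ((Zs*Zs*(zp*zp) + Fv*Fv)/(r*r) + zp*zp); [field; lra|].
    rewrite zz, rr. field. nra.
  - transitivity (-(r*r)*w*(c^2+sn^2)); [ring|]. rewrite Ht, ew. field. lra.
Qed.

Lemma exist_profile (F DF : R -> R) (Pp : R -> Prop) z0 e : 0 < e ->
  (forall w, Rabs (w - z0) < e -> (0 < w < 1 /\ CC1 F DF w /\ F w * F w < 1 - w * w) /\ Pp w) ->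
  exists a b x y z, admissible_profile a b x y z /\ in_I a b 0 /\ z 0 = z0 /\
    forall s, in_I a b s -> ang_mom x y s = F (z s) /\ Pp (z s).
Proof.
  intros ep HU.
  set (B := fun w => Rabs (w - z0) < e).
  assert (Bz0 : B z0) by (unfold B; rewrite Rminus_eq_0, Rabs_R0; auto).
  set (g0 := fun t => 1 - t*t - F t * F t).
  assert (Hg0 : exists G1, forall w, B w -> CC1 g0 G1 w /\ 0 < g0 w).
  { eexists. intros w Hw. destruct (HU w Hw) as ((w01 & HF & Hlt) & _). split; [|unfold g0; lra].
    unfold g0. apply CC1_minus; [apply CC1_minus; [apply CC1_const|apply CC1_mult; apply CC1_id] | apply CC1_mult; exact HF]. }
  destruct Hg0 as [G1 Hg0].
  set (q := fun t => / sqrt (g0 t)).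
  assert (Hq : forall w, B w -> continuous q w /\ 0 < q w).
  { intros w Hw. destruct (Hg0 w Hw) as [[d _] p]. split.
    - apply cont_inv; [apply cont_sqrt; eapply cont_der; eauto|]. apply Rgt_not_eq, sqrt_lt_R0; auto.
    - apply Rinv_0_lt_compat, sqrt_lt_R0; auto. }
  set (sig := fun w => RInt q z0 w).
  assert (Hsig : forall w, B w -> is_derive sig w (q w)).
  { intros w Hw. apply (is_derive_RInt q sig z0 w); [|apply Hq; auto].
    apply (filter_imp B); [|apply ball_open; auto].
    intros b Hb. refine (RInt_correct q z0 b (ex_RInt_continuous q z0 b _)).
    intros t Ht. apply Hq. apply (ball_conv z0 e z0 b); auto. }
  set (w1 := z0 - e/2). set (w2 := z0 + e/2).
  assert (Bw : forall w, w1 <= w <= w2 -> B w).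
  { intros w Hw. unfold B, w1, w2 in *. apply Rabs_def1; lra. }
  destruct (INV sig q w1 w2 ltac:(unfold w1, w2; lra)) as (zeta & Z1 & Z2 & Z3 & inc).
  { intros w Hw. split; [apply Hsig|apply Hq]; auto. }
  assert (s0 : sig z0 = 0) by (unfold sig; rewrite RInt_point; reflexivity).
  assert (sa : sig w1 < 0) by (rewrite <- s0; apply inc; unfold w1, w2; lra).
  assert (sb : 0 < sig w2) by (rewrite <- s0; apply inc; unfold w1, w2; lra).
  set (a := Finite (sig w1)). set (b := Finite (sig w2)).
  assert (Iz : forall s, in_I a b s -> w1 <= zeta s <= w2 /\ B (zeta s)).
  { intros s [Hs1 Hs2]. simpl in Hs1, Hs2. destruct (Z1 s ltac:(lra)) as [H _]. split; auto. }
  assert (zeta0 : zeta 0 = z0).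
  { rewrite <- s0. apply Z2. unfold w1, w2; lra. }
  set (SQ1 := fun t => G1 t / (2 * sqrt (g0 t))).
  assert (Hsq : forall w, B w -> CC1 (fun t => sqrt (g0 t)) SQ1 w).
  { intros w Hw. destruct (Hg0 w Hw) as [c p]. apply CC1_sqrt; auto. }
  set (Zp := fun s => sqrt (g0 (zeta s))).
  assert (dzeta : forall s, in_I a b s -> is_derive zeta s (Zp s)).
  { intros s Hs. destruct Hs as [Hs1 Hs2]. simpl in Hs1, Hs2.
    pose proof (Z3 s (conj Hs1 Hs2)) as D. unfold q in D. cbv beta in D. rewrite Rinv_inv in D. exact D. }
  assert (Hzeta : forall s, in_I a b s -> CC2 zeta Zp (fun s => SQ1 (zeta s) * Zp s) s).
  { intros s Hs. destruct (Iz s Hs) as [_ Bs]. split; [|split].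
    - apply dzeta; auto.
    - apply (is_derive_comp' (fun t => sqrt (g0 t)) zeta). apply Hsq; auto. apply dzeta; auto.
    - apply cont_mult.
      + apply (cont_comp SQ1 zeta); [eapply cont_der; apply dzeta; auto|]. apply Hsq; auto.
      + apply (cont_comp (fun t => sqrt (g0 t)) zeta); [eapply cont_der; apply dzeta; auto|]. eapply cont_der. apply Hsq; auto. }
  set (RT1 := fun t => (0 - (1*t + t*1)) / (2 * sqrt (1 - t*t))).
  assert (HRT : exists RT2, forall w, 0 < w < 1 -> CC1 (fun t => sqrt (1 - t*t)) RT1 w /\ CC1 RT1 RT2 w).
  { eexists. intros w Hw. split.
    - apply (CC1_sqrt (fun t => 1 - t*t) (fun t => 0 - (1*t + t*1))); [|nra].
      apply CC1_minus; [apply CC1_const| apply CC1_mult; apply CC1_id].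
    - unfold RT1, Rdiv. apply CC1_mult.
      + apply CC1_minus; [apply CC1_const| apply CC1_plus; apply CC1_mult].
        * apply CC1_const.
        * apply CC1_id.
        * apply CC1_id.
        * apply CC1_const.
      + apply CC1_inv.
        * apply CC1_mult; [apply CC1_const|]. apply CC1_sqrt; [|nra].
          apply CC1_minus; [apply CC1_const| apply CC1_mult; apply CC1_id].
        * apply Rmult_integral_contrapositive_currified; [lra|]. apply Rgt_not_eq, sqrt_lt_R0; nra. }
  destruct HRT as [RT2 HRT].
  set (Om := fun t => - F t * / (1 - t*t)).
  assert (HOm : exists OM1, forall w, B w -> CC1 Om OM1 w).
  { eexists. intros w Hw. destruct (HU w Hw) as ((w01 & HF & Hlt) & _).
    unfold Om. apply CC1_mult; [apply CC1_opp; exact HF|].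
    apply CC1_inv; [apply CC1_minus; [apply CC1_const|apply CC1_mult; apply CC1_id]|nra]. }
  destruct HOm as [OM1 HOm].
  set (om := fun s => Om (zeta s)).
  assert (Hom : forall s, in_I a b s -> is_derive om s (OM1 (zeta s) * Zp s)).
  { intros s Hs. destruct (Iz s Hs) as [_ Bs]. apply (is_derive_comp' Om zeta).
    apply HOm; auto. apply dzeta; auto. }
  assert (I0 : in_I a b 0) by (split; simpl; lra).
  set (th := fun s => RInt om 0 s).
  assert (Hth : forall s, in_I a b s -> CC2 th om (fun s => OM1 (zeta s) * Zp s) s).
  { intros s Hs. destruct (Iz s Hs) as [_ Bs]. split; [|split].
    - apply (is_derive_RInt om th 0 s); [|eapply cont_der; apply Hom; auto].
      apply (filter_imp (in_I a b)); [|apply in_I_loc; auto].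
      intros t Ht. refine (RInt_correct om 0 t (ex_RInt_continuous om 0 t _)).
      intros u Hu. eapply cont_der. apply Hom.
      apply (in_I_between a b (Rmin 0 t) (Rmax 0 t)); auto;
        unfold Rmin, Rmax; destruct Rle_dec; auto.
    - apply Hom; auto.
    - apply cont_mult.
      + apply (cont_comp OM1 zeta); [eapply cont_der; apply dzeta; auto|]. apply HOm; auto.
      + eapply cont_der. apply (is_derive_comp' (fun t => sqrt (g0 t)) zeta). apply Hsq; auto. apply dzeta; auto. }
  assert (Zin : forall s, in_I a b s -> 0 < zeta s < 1 /\ F (zeta s) * F (zeta s) < 1 - zeta s * zeta s /\ Pp (zeta s)).
  { intros s Hs. destruct (Iz s Hs) as [_ Bs]. destruct (HU _ Bs) as ((p1 & _ & p2) & p3). auto. }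
  set (rho := fun s => sqrt (1 - zeta s * zeta s)).
  assert (Hrho : forall s, in_I a b s -> CC2 rho (fun t => RT1 (zeta t) * Zp t)
      (fun t => RT2 (zeta t) * Zp t * Zp t + RT1 (zeta t) * (SQ1 (zeta t) * Zp t)) s).
  { intros s Hs. destruct (Zin s Hs) as (zi & _).
    exact (CC2_comp (fun t => sqrt (1 - t*t)) RT1 RT2 zeta Zp (fun s => SQ1 (zeta s) * Zp s) s
             (proj1 (HRT _ zi)) (proj2 (HRT _ zi)) (Hzeta s Hs)). }
  assert (Hcos : forall s, in_I a b s -> CC2 (fun t => cos (th t)) (fun t => - sin (th t) * om t)
      (fun t => - cos (th t) * om t * om t + - sin (th t) * (OM1 (zeta t) * Zp t)) s).
  { intros s Hs. exact (CC2_comp cos (fun t => - sin t) (fun t => - cos t) th om _ s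
             (CC1_cos _) (CC1_msin _) (Hth s Hs)). }
  assert (Hsin : forall s, in_I a b s -> CC2 (fun t => sin (th t)) (fun t => cos (th t) * om t)
      (fun t => - sin (th t) * om t * om t + cos (th t) * (OM1 (zeta t) * Zp t)) s).
  { intros s Hs. exact (CC2_comp sin cos (fun t => - sin t) th om _ s
             (CC1_sin _) (CC1_cos _) (Hth s Hs)). }
  set (x := fun s => rho s * cos (th s)). set (y := fun s => rho s * sin (th s)).
  set (X1 := fun t => RT1 (zeta t) * Zp t * cos (th t) + rho t * (- sin (th t) * om t)).
  set (Y1 := fun t => RT1 (zeta t) * Zp t * sin (th t) + rho t * (cos (th t) * om t)).
  assert (Hx : exists X2, forall s, in_I a b s -> CC2 x X1 X2 s).
  { eexists. intros s Hs. exact (CC2_mult _ _ _ _ _ _ s (Hrho s Hs) (Hcos s Hs)). }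
  assert (Hy : exists Y2, forall s, in_I a b s -> CC2 y Y1 Y2 s).
  { eexists. intros s Hs. exact (CC2_mult _ _ _ _ _ _ s (Hrho s Hs) (Hsin s Hs)). }
  destruct Hx as [X2 Hx]. destruct Hy as [Y2 Hy].
  exists a, b, x, y, zeta. split; [split|split; [auto|split; [auto|]]].
  - simpl; lra.
  - intros s Hs.
    destruct (CC2_Derive a b x X1 X2 Hx s Hs) as (ex & dx & exx & _ & cx).
    destruct (CC2_Derive a b y Y1 Y2 Hy s Hs) as (ey & dy & eyy & _ & cy).
    destruct (CC2_Derive a b zeta Zp _ Hzeta s Hs) as (ez & dz & ezz & _ & cz).
    rewrite dx, dy, dz. destruct (Zin s Hs) as (zi & zF & _).
    assert (Ht : cos (th s) ^ 2 + sin (th s) ^ 2 = 1) by (rewrite Rplus_comm, <- !Rsqr_pow2; apply sin2_cos2).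
    destruct (alg_ex (zeta s) (F (zeta s)) (cos (th s)) (sin (th s)) zi zF Ht) as (A0 & A1 & _).
    repeat split; auto; try lra.
    + apply Rgt_not_eq, sqrt_lt_R0. unfold g0. lra.
  - intros s Hs. destruct (Zin s Hs) as (zi & zF & P).
    assert (Ht : cos (th s) ^ 2 + sin (th s) ^ 2 = 1) by (rewrite Rplus_comm, <- !Rsqr_pow2; apply sin2_cos2).
    destruct (alg_ex (zeta s) (F (zeta s)) (cos (th s)) (sin (th s)) zi zF Ht) as (_ & _ & A2).
    destruct (CC2_Derive a b x X1 X2 Hx s Hs) as (ex & dx & _).
    destruct (CC2_Derive a b y Y1 Y2 Hy s Hs) as (ey & dy & _).
    split; auto. unfold ang_mom. rewrite dx, dy. exact A2.
Qed.

Lemma CC1_scal c f f1 w : CC1 f f1 w -> CC1 (fun t => c * f t) (fun t => c * f1 t) w.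
Proof.
  intros H. apply (CC1_ext (fun t => c * f t) _ (fun t => 0 * f t + c * f1 t)); try (intros; ring).
  apply CC1_mult; auto. apply CC1_const.
Qed.
Lemma CC1_pow2 f f1 w : CC1 f f1 w -> CC1 (fun t => f t ^ 2) (fun t => f1 t * f t + f t * f1 t) w.
Proof.
  intros H. apply (CC1_ext (fun t => f t * f t) _ (fun t => f1 t * f t + f t * f1 t)); try (intros; ring).
  apply CC1_mult; auto.
Qed.
Lemma CC1_div f f1 g g1 w : CC1 f f1 w -> CC1 g g1 w -> g w <> 0 ->
  CC1 (fun t => f t / g t) (fun t => f1 t * / g t + f t * (- g1 t / (g t * g t))) w.
Proof.
  intros H1 H2 nz. unfold Rdiv at 1. apply CC1_mult; auto. apply CC1_inv; auto.
Qed.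

Lemma cont_pos_ball (f : R -> R) x : continuous f x -> 0 < f x ->
  exists e, 0 < e /\ forall w, Rabs (w - x) < e -> 0 < f w.
Proof.
  intros Hc Hp.
  assert (L : locally x (fun w => 0 < f w)) by exact (Hc (fun y => 0 < y) (open_gt 0 (f x) Hp)).
  destruct L as [eps He]. exists eps. split; [apply cond_pos|]. intros w Hw. apply He. exact Hw.
Qed.

Lemma cont_nz_ball (f : R -> R) x : continuous f x -> f x <> 0 ->
  exists e, 0 < e /\ forall w, Rabs (w - x) < e -> f w <> 0.
Proof.
  intros Hc Hp. destruct (cont_pos_ball (fun t => Rabs (f t)) x) as (e & ep & He).
  - apply continuous_Rabs_comp; auto.
  - apply Rabs_pos_lt; auto.
  - exists e. split; auto. intros w Hw. pose proof (He w Hw) as P. intro C. rewrite C, Rabs_R0 in P. lra.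
Qed.

Lemma ball_min (P1 P2 : R -> Prop) x e1 e2 : 0 < e1 -> 0 < e2 ->
  (forall w, Rabs (w - x) < e1 -> P1 w) -> (forall w, Rabs (w - x) < e2 -> P2 w) ->
  exists e, 0 < e /\ forall w, Rabs (w - x) < e -> P1 w /\ P2 w.
Proof.
  intros p1 p2 H1 H2. exists (Rmin e1 e2). split; [apply Rmin_glb_lt; auto|].
  intros w Hw. split; [apply H1|apply H2]; eapply Rlt_le_trans; eauto; [apply Rmin_l|apply Rmin_r].
Qed.

Lemma ball_unit z0 : 0 < z0 < 1 -> exists e, 0 < e /\ forall w, Rabs (w - z0) < e -> 0 < w < 1.
Proof.
  intros Hz. exists (Rmin z0 (1 - z0)). split; [apply Rmin_glb_lt; lra|].
  intros w Hw. pose proof (Rmin_l z0 (1 - z0)). pose proof (Rmin_r z0 (1 - z0)).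
  apply Rabs_def2 in Hw. lra.
Qed.

Lemma CC1_anti (f P : R -> R) w : (forall z, 0 < z -> continuous f z) -> antideriv f P -> 0 < w -> CC1 P f w.
Proof. intros Hc HP Hw. split; [apply HP; auto|apply Hc; auto]. Qed.

Lemma exist_a h H Phi eps z0 : 0 <= h -> (forall z, 0 < z -> continuous H z) ->
  antideriv (fun z => 2 * z * H z) Phi -> (eps = 1 \/ eps = -1) -> 0 < z0 < 1 ->
  fA h Phi z0 ^ 2 < 1 - z0 ^ 2 ->
  exists (a b : Rbar) (x y z : R -> R),
    admissible_profile a b x y z /\ in_I a b 0 /\ z 0 = z0 /\
    (forall s, in_I a b s -> ang_mom x y s = eps * fA h Phi (z s)) /\
    has_mean_curvature h a b x y z H.
Proof.
  intros h0 Hc HPhi He Hz Hlt.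
  set (F := fun w => eps * fA h Phi w).
  assert (HP : forall w, 0 < w -> CC1 Phi (fun z => 2 * z * H z) w) by (intros; apply CC1_anti; auto; apply cont_2z; auto).
  assert (HC : exists DF, forall w, 0 < w < 1 -> CC1 F DF w).
  { eexists. intros w Hw.
    eapply (CC1_ext (fun t => eps * (sqrt (h ^ 2 + (1 - h ^ 2) * t ^ 2) * (Phi t / t ^ 2) / sqrt (1 + h ^ 2 * (Phi t / t ^ 2) ^ 2))) F _ _);
      [intros; unfold F, fA; reflexivity | intros; reflexivity |].
    assert (w2 : w ^ 2 <> 0) by (apply pow_nonzero; lra).
    apply CC1_scal. apply CC1_div; [apply CC1_mult; [apply CC1_sqrt|apply CC1_div]|apply CC1_sqrt|].
    - apply CC1_plus; [apply CC1_const|apply CC1_mult; [apply CC1_const|apply CC1_pow2, CC1_id]].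
    - cbv beta. replace (h^2 + (1-h^2)*w^2) with (h^2*(1-w^2) + w^2) by ring.
      assert (0 < w^2) by nra. assert (0 <= h^2 * (1 - w^2)) by (apply Rmult_le_pos; nra). lra.
    - apply HP; lra.
    - apply CC1_pow2, CC1_id.
    - auto.
    - apply CC1_plus; [apply CC1_const|apply CC1_mult; [apply CC1_const|apply CC1_pow2, CC1_div; auto]].
      + apply HP; lra.
      + apply CC1_pow2, CC1_id.
    - cbv beta. assert (0 <= h ^ 2 * (Phi w / w ^ 2) ^ 2) by (apply Rmult_le_pos; apply pow2_ge_0). lra.
    - cbv beta. apply Rgt_not_eq, sqrt_lt_R0. assert (0 <= h ^ 2 * (Phi w / w ^ 2) ^ 2) by (apply Rmult_le_pos; apply pow2_ge_0). lra. }
  destruct HC as [DF HC].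
  destruct (ball_unit z0 Hz) as (e1 & e1p & He1).
  assert (e2 : exists e, 0 < e /\ forall w, Rabs (w - z0) < e -> 0 < 1 - w * w - F w * F w).
  { apply cont_pos_ball.
    - assert (cF : continuous F z0) by (eapply cont_der; apply (HC z0 Hz)).
      apply cont_minus; [apply cont_minus; [apply cont_const|apply cont_mult; apply cont_id]|apply cont_mult; auto].
    - unfold F. assert (E : eps * eps = 1) by (destruct He; subst; ring).
      replace (eps * fA h Phi z0 * (eps * fA h Phi z0)) with ((eps*eps) * fA h Phi z0 ^ 2) by ring.
      rewrite E. lra. }
  destruct e2 as (e2 & e2p & He2).
  destruct (ball_min _ _ z0 e1 e2 e1p e2p He1 He2) as (e & ep & Hb).
  destruct (exist_profile F DF (fun _ => True) z0 e ep) as (a & b & x & y & z & Ha & I0 & z00 & Hs).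
  { intros w Hw. destruct (Hb w Hw) as [p1 p2]. split; auto. split; auto. split; [apply HC; auto|lra]. }
  exists a, b, x, y, z. split; auto. split; auto. split; auto.
  assert (HK : forall s, in_I a b s -> ang_mom x y s = eps * fA h Phi (z s)) by (intros s Hs'; apply Hs; auto).
  split; auto.
  apply (iff_a h H Hc a b x y z Ha). exists Phi, eps. auto.
Qed.

Lemma exist_b h Kext B eps z0 : 0 <= h -> h <> 1 -> (forall z, 0 < z -> continuous Kext z) ->
  antideriv (fun z => 2 * z * Kext z) B -> (eps = 1 \/ eps = -1) -> 0 < z0 < 1 ->
  z0 ^ 2 + h ^ 2 * B z0 <> 0 -> 0 < RB h B z0 < 1 - z0 ^ 2 ->
  exists (a b : Rbar) (x y z : R -> R),
    admissible_profile a b x y z /\ in_I a b 0 /\ z 0 = z0 /\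
    (forall s, in_I a b s -> ang_mom x y s = eps * sqrt (RB h B (z s))) /\
    has_ext_curvature h a b x y z Kext.
Proof.
  intros h0 h1 Hc HB He Hz Hn Hr.
  set (F := fun w => eps * sqrt (RB h B w)).
  assert (HP : forall w, 0 < w -> CC1 B (fun z => 2 * z * Kext z) w) by (intros; apply CC1_anti; auto; apply cont_2z; auto).
  assert (HRB : exists DR, forall w, 0 < w -> w ^ 2 + h ^ 2 * B w <> 0 -> CC1 (RB h B) DR w).
  { eexists. intros w Hw Hnz. unfold RB.
    apply CC1_plus; [apply CC1_const|]. apply CC1_div; auto.
    - apply CC1_mult; [apply CC1_mult; [apply CC1_const|apply CC1_pow2, CC1_id]|apply HP; auto].
    - apply CC1_plus; [apply CC1_pow2, CC1_id|apply CC1_mult; [apply CC1_const|apply HP; auto]]. }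
  destruct HRB as [DR HRB].
  assert (HC : exists DF, forall w, 0 < w -> w ^ 2 + h ^ 2 * B w <> 0 -> 0 < RB h B w -> CC1 F DF w).
  { eexists. intros w Hw Hnz Hp. unfold F. apply CC1_scal. apply CC1_sqrt; auto. }
  destruct HC as [DF HC].
  destruct (ball_unit z0 Hz) as (e1 & e1p & He1).
  assert (cB : continuous B z0) by (eapply cont_der; apply (HP z0 ltac:(lra))).
  destruct (cont_nz_ball (fun w => w ^ 2 + h ^ 2 * B w) z0) as (e2 & e2p & He2); auto.
  { apply cont_plus; [apply cont_mult; [apply cont_id|apply cont_mult; [apply cont_id|apply cont_const]]|apply cont_mult; [apply cont_const|auto]]. }
  assert (cR : continuous (RB h B) z0) by (eapply cont_der; apply (HRB z0 ltac:(lra) Hn)).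
  destruct (cont_pos_ball (RB h B) z0 cR) as (e3 & e3p & He3); [lra|].
  destruct (cont_pos_ball (fun w => 1 - w * w - RB h B w) z0) as (e4 & e4p & He4).
  { apply cont_minus; [apply cont_minus; [apply cont_const|apply cont_mult; apply cont_id]|auto]. }
  { lra. }
  destruct (ball_min _ _ z0 e1 e2 e1p e2p He1 He2) as (e5 & e5p & He5).
  destruct (ball_min _ _ z0 e3 e4 e3p e4p He3 He4) as (e6 & e6p & He6).
  destruct (ball_min _ _ z0 e5 e6 e5p e6p He5 He6) as (e & ep & Hb).
  destruct (exist_profile F DF (fun w => w ^ 2 + h ^ 2 * B w <> 0 /\ 0 < RB h B w) z0 e ep)
    as (a & b & x & y & z & Ha & I0 & z00 & Hs).
  { intros w Hw. destruct (Hb w Hw) as [[p1 p2] [p3 p4]]. split; [|auto]. split; auto. split; [apply HC; auto; lra|].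
    unfold F. assert (E : eps * eps = 1) by (destruct He; subst; ring).
    replace (eps * sqrt (RB h B w) * (eps * sqrt (RB h B w))) with ((eps*eps) * (sqrt (RB h B w) * sqrt (RB h B w))) by ring.
    rewrite E, sqrt_sqrt by lra. lra. }
  exists a, b, x, y, z. split; auto. split; auto. split; auto.
  assert (HK : forall s, in_I a b s -> ang_mom x y s = eps * sqrt (RB h B (z s))) by (intros s Hs'; apply Hs; auto).
  split; auto.
  apply (iff_b h Kext Hc h0 h1 a b x y z Ha). exists B. split; auto.
  intros s Hs'. destruct (Hs s Hs') as [_ [P1 P2]]. split; auto. split; [lra|].
  rewrite (HK s Hs'). destruct He; subst; [left|right]; ring.
Qed.

Theorem theorem4p4 :
  (* (a) prescribed mean curvature *)
  (forall (h : R) (H : R -> R),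
    0 <= h ->
    (forall z, 0 < z -> continuous H z) ->
    (exists Phi, antideriv (fun z => 2 * z * H z) Phi) /\
    (forall (Phi : R -> R) (eps z0 : R),
       antideriv (fun z => 2 * z * H z) Phi ->
       (eps = 1 \/ eps = -1) ->
       0 < z0 < 1 ->
       fA h Phi z0 ^ 2 < 1 - z0 ^ 2 ->
       exists (a b : Rbar) (x y z : R -> R),
         admissible_profile a b x y z /\ in_I a b 0 /\ z 0 = z0 /\
         (forall s, in_I a b s -> ang_mom x y s = eps * fA h Phi (z s)) /\
         has_mean_curvature h a b x y z H) /\
    (forall (a b : Rbar) (x y z : R -> R),
       admissible_profile a b x y z ->
       (has_mean_curvature h a b x y z H <->
        exists (Phi : R -> R) (eps : R),
          antideriv (fun z => 2 * z * H z) Phi /\ (eps = 1 \/ eps = -1) /\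
          forall s, in_I a b s -> ang_mom x y s = eps * fA h Phi (z s))) /\
    c0_uniqueness h)
  /\
  (* (b) prescribed extrinsic curvature *)
  (forall (h : R) (Kext : R -> R),
    0 <= h -> h <> 1 ->
    (forall z, 0 < z -> continuous Kext z) ->
    (exists B, antideriv (fun z => 2 * z * Kext z) B) /\
    (forall (B : R -> R) (eps z0 : R),
       antideriv (fun z => 2 * z * Kext z) B ->
       (eps = 1 \/ eps = -1) ->
       0 < z0 < 1 ->
       z0 ^ 2 + h ^ 2 * B z0 <> 0 ->
       0 < RB h B z0 < 1 - z0 ^ 2 ->
       exists (a b : Rbar) (x y z : R -> R),
         admissible_profile a b x y z /\ in_I a b 0 /\ z 0 = z0 /\
         (forall s, in_I a b s -> ang_mom x y s = eps * sqrt (RB h B (z s))) /\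
         has_ext_curvature h a b x y z Kext) /\
    (forall (a b : Rbar) (x y z : R -> R),
       admissible_profile a b x y z ->
       (has_ext_curvature h a b x y z Kext <->
        exists B : R -> R,
          antideriv (fun z => 2 * z * Kext z) B /\
          forall s, in_I a b s ->
            z s ^ 2 + h ^ 2 * B (z s) <> 0 /\ 0 <= RB h B (z s) /\
            (ang_mom x y s = sqrt (RB h B (z s)) \/
             ang_mom x y s = - sqrt (RB h B (z s))))) /\
    c0_uniqueness h).
Proof.
  split.
  - intros h H h0 Hc. split; [|split; [|split]].
    + apply antideriv_exists, cont_2z; auto.
    + intros Phi eps z0 HP He Hz Hl. apply exist_a; auto.
    + intros a b x y z Ha. apply iff_a; auto.
    + apply c0_uniq.
  - intros h Kext h0 h1 Hc. split; [|split; [|split]].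
    + apply antideriv_exists, cont_2z; auto.
    + intros B eps z0 HB He Hz Hn Hr. apply exist_b; auto.
    + intros a b x y z Ha. apply iff_b; auto.
    + apply c0_uniq.
Qed.
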